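(* Let $M$ be a timelike surface in $\mathbb{R}^{n,1}$ with a canonical null direction with respect to a constant unit spacelike vector $Z$, and let $W$ be as below. Then $$\nabla^\perp_W\vec H=-\nabla^\perp_{Z^\top}\big(II(W,W)\big),\qquad |\vec H|^2=-\langle\nabla^\perp_W\vec H,Z^\perp\rangle,$$ and the Gaussian curvature satisfies $$K=|\vec H|^2-\langle II(W,W),II(Z^\top,Z^\top)\rangle.$$
   Context: $\mathbb{R}^{n,1}$ is $\mathbb{R}^{n+1}$ with the metric $-dx_1^2+dx_2^2+\dots+dx_{n+1}^2$. A surface is timelike if the induced metric has signature $(1,1)$; a vector $v$ is lightlike if $v\ne0$ and $\langle v,v\rangle=0$. For a constant vector $Z$, $Z=Z^\top+Z^\perp$ along $M$; $M$ has a canonical null direction with respect to $Z$ if $Z^\top$ is lightlike everywhere on $M$. $W$ is the unique lightlike tangent field with $\langle Z^\top,W\rangle=-1$. $II$ is the second fundamental form, $\nabla^\perp$ the normal connection, $\vec H=\frac12\operatorname{tr}_{\langle,\rangle}II$ the mean curvature vector (which equals $-II(Z^\top,W)$), $|\vec H|^2:=\langle\vec H,\vec H\rangle$, and $K$ the Gaussian curvature of $M$. *)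

(* Defs.v *)
From Stdlib Require Import Reals Lra List ClassicalEpsilon.
Open Scope R_scope.

(* A vector of R^{n+1} is a function nat -> R; only the components 0..n are
   meaningful.  Component 0 is the time coordinate. *)
Definition vec := nat -> R.

Definition vadd (x y : vec) : vec := fun k => x k + y k.
Definition vsub (x y : vec) : vec := fun k => x k - y k.
Definition vscale (a : R) (x : vec) : vec := fun k => a * x k.
Definition vopp (x : vec) : vec := fun k => - x k.

Definition mink (n : nat) (x y : vec) : R :=
  sum_f_R0 (fun k => (if Nat.eqb k 0 then -1 else 1) * x k * y k) n.

Definition veq (n : nat) (x y : vec) : Prop := forall k, (k <= n)%nat -> x k = y k.
Definition vnonzero (n : nat) (x : vec) : Prop := exists k, (k <= n)%nat /\ x k <> 0.

(* partial derivative in the i-th coordinate (i = 0 : u, otherwise v),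
   defined as *the* derivative (chosen by epsilon; it is unique when it exists). *)
Definition pd (i : nat) (f : R -> R -> R) (u v : R) : R :=
  match i with
  | O => epsilon (inhabits 0) (fun l => derivable_pt_lim (fun s => f s v) u l)
  | _ => epsilon (inhabits 0) (fun l => derivable_pt_lim (fun s => f u s) v l)
  end.

Definition has_pd (i : nat) (f : R -> R -> R) (u v : R) : Prop :=
  match i with
  | O => exists l, derivable_pt_lim (fun s => f s v) u l
  | _ => exists l, derivable_pt_lim (fun s => f u s) v l
  end.

Definition pdv (i : nat) (F : R -> R -> vec) (u v : R) : vec :=
  fun k => pd i (fun a b => F a b k) u v.

Definition open2 (U : R -> R -> Prop) : Prop :=
  forall u v, U u v -> exists r, r > 0 /\
    forall u' v', Rabs (u' - u) < r -> Rabs (v' - v) < r -> U u' v'.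

Definition continuous_on2 (U : R -> R -> Prop) (f : R -> R -> R) : Prop :=
  forall u v, U u v -> forall eps, eps > 0 -> exists d, d > 0 /\
    forall u' v', U u' v' -> Rabs (u' - u) < d -> Rabs (v' - v) < d ->
      Rabs (f u' v' - f u v) < eps.

Fixpoint iter_pd (w : list nat) (f : R -> R -> R) : R -> R -> R :=
  match w with
  | nil => f
  | i :: w' => pd i (iter_pd w' f)
  end.

Definition smooth_on (U : R -> R -> Prop) (f : R -> R -> R) : Prop :=
  forall w : list nat,
    (forall i u v, U u v -> has_pd i (iter_pd w f) u v) /\
    continuous_on2 U (iter_pd w f).

Definition sum2 (f : nat -> R) : R := f 0%nat + f 1%nat.
Definition vsum2 (f : nat -> vec) : vec := fun k => f 0%nat k + f 1%nat k.

Section Surface.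
Variable n : nat.
Variable X : R -> R -> vec.

Definition Xd (i : nat) : R -> R -> vec := pdv i X.

Definition gmet (i j : nat) (u v : R) : R := mink n (Xd i u v) (Xd j u v).
Definition gdet (u v : R) : R := gmet 0 0 u v * gmet 1 1 u v - gmet 0 1 u v * gmet 1 0 u v.
Definition ginv (i j : nat) (u v : R) : R :=
  match i, j with
  | O, O => gmet 1 1 u v / gdet u v
  | O, _ => - gmet 0 1 u v / gdet u v
  | _, O => - gmet 1 0 u v / gdet u v
  | _, _ => gmet 0 0 u v / gdet u v
  end.

Definition tvec (a : nat -> R) (u v : R) : vec := vsum2 (fun i => vscale (a i) (Xd i u v)).

Definition tcoef (Y : vec) (u v : R) (i : nat) : R :=
  sum2 (fun j => ginv i j u v * mink n Y (Xd j u v)).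
Definition tanp (Y : vec) (u v : R) : vec := tvec (tcoef Y u v) u v.
Definition norp (Y : vec) (u v : R) : vec := vsub Y (tanp Y u v).

Definition IIc (i j : nat) (u v : R) : vec := norp (pdv i (Xd j) u v) u v.
Definition II (a b : nat -> R) (u v : R) : vec :=
  vsum2 (fun i => vsum2 (fun j => vscale (a i * b j) (IIc i j u v))).

Definition Hvec (u v : R) : vec :=
  vscale (1/2) (vsum2 (fun i => vsum2 (fun j => vscale (ginv i j u v) (IIc i j u v)))).

Definition Dv (a : nat -> R) (xi : R -> R -> vec) (u v : R) : vec :=
  vsum2 (fun i => vscale (a i) (pdv i xi u v)).
Definition nablaperp (a : nat -> R) (xi : R -> R -> vec) (u v : R) : vec :=
  norp (Dv a xi u v) u v.

Definition Gam (k i j : nat) (u v : R) : R :=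
  (1/2) * sum2 (fun l => ginv k l u v *
     (pd i (gmet j l) u v + pd j (gmet i l) u v - pd l (gmet i j) u v)).

(* coefficients c^m of R(d_0,d_1)d_1 = nabla_0 nabla_1 d_1 - nabla_1 nabla_0 d_1 *)
Definition Rcoef (m : nat) (u v : R) : R :=
  pd 0 (Gam m 1 1) u v - pd 1 (Gam m 0 1) u v
  + sum2 (fun k => Gam k 1 1 u v * Gam m 0 k u v - Gam k 0 1 u v * Gam m 1 k u v).

(* Gaussian curvature K = <R(d_0,d_1)d_1, d_0> / (g_00 g_11 - g_01^2) *)
Definition Kgauss (u v : R) : R :=
  sum2 (fun m => Rcoef m u v * gmet m 0 u v) / gdet u v.

End Surface.

Definition ZTc (n : nat) (X : R -> R -> vec) (Z : vec) (u v : R) : nat -> R :=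
  tcoef n X Z u v.

(* Main.v *)
Require Import Defs.
From Stdlib Require Import Reals Lra Lia Psatz List ClassicalEpsilon FunctionalExtensionality.
From Coquelicot Require Coquelicot.
Open Scope R_scope.

Definition lnf (i:nat) (f:R->R->R) (u v:R) : R -> R :=
  match i with O => fun s => f s v | _ => fun s => f u s end.
Definition pt (i:nat) (u v:R) : R := match i with O => u | _ => v end.
Definition Dpt i f u v l := derivable_pt_lim (lnf i f u v) (pt i u v) l.

Lemma has_pd_Dpt i f u v : has_pd i f u v <-> exists l, Dpt i f u v l.
Proof. destruct i; reflexivity. Qed.

Lemma pd_Dpt i f u v l : Dpt i f u v l -> pd i f u v = l.
Proof.
  intro H. destruct i; unfold pd, Dpt in *; simpl in *;
  (eapply uniqueness_limite; [apply epsilon_spec; eexists; exact H | exact H]).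
Qed.

Lemma Dpt_pd i f u v : has_pd i f u v -> Dpt i f u v (pd i f u v).
Proof.
  intros [l H]%has_pd_Dpt. rewrite (pd_Dpt _ _ _ _ _ H). exact H.
Qed.

Lemma Dpt_has i f u v l : Dpt i f u v l -> has_pd i f u v.
Proof. intro H. apply has_pd_Dpt. eauto. Qed.

Lemma ln_pt i f u v : lnf i f u v (pt i u v) = f u v.
Proof. destruct i; reflexivity. Qed.

Lemma Dpt_const i c u v : Dpt i (fun _ _ => c) u v 0.
Proof. destruct i; apply derivable_pt_lim_const. Qed.

Lemma Dpt_plus i f g u v l1 l2 : Dpt i f u v l1 -> Dpt i g u v l2 ->
  Dpt i (fun a b => f a b + g a b) u v (l1 + l2).
Proof. destruct i; apply derivable_pt_lim_plus. Qed.

Lemma Dpt_minus i f g u v l1 l2 : Dpt i f u v l1 -> Dpt i g u v l2 ->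
  Dpt i (fun a b => f a b - g a b) u v (l1 - l2).
Proof. destruct i; apply derivable_pt_lim_minus. Qed.

Lemma Dpt_opp i f u v l1 : Dpt i f u v l1 ->
  Dpt i (fun a b => - f a b) u v (- l1).
Proof. destruct i; apply derivable_pt_lim_opp. Qed.

Lemma Dpt_mult i f g u v l1 l2 : Dpt i f u v l1 -> Dpt i g u v l2 ->
  Dpt i (fun a b => f a b * g a b) u v (l1 * g u v + f u v * l2).
Proof. destruct i; apply derivable_pt_lim_mult. Qed.

Lemma Dpt_div i f g u v l1 l2 : Dpt i f u v l1 -> Dpt i g u v l2 -> g u v <> 0 ->
  Dpt i (fun a b => f a b / g a b) u v ((l1 * g u v - l2 * f u v) / (g u v)²).
Proof. intros H1 H2 H3. destruct i; unfold Dpt, lnf, pt in *;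
  apply (derivable_pt_lim_div _ _ _ _ _ H1 H2 H3). Qed.

Lemma Dpt_ext i f g u v l1 l2 : (forall a b, f a b = g a b) -> l1 = l2 ->
  Dpt i f u v l1 -> Dpt i g u v l2.
Proof.
  intros H ->. replace g with f; auto.
  apply functional_extensionality; intro; apply functional_extensionality; auto.
Qed.

Lemma Dpt_loc (U : R -> R -> Prop) i f g u v l : open2 U -> U u v ->
  (forall a b, U a b -> f a b = g a b) -> Dpt i f u v l -> Dpt i g u v l.
Proof.
  intros HU Huv Hfg H. destruct (HU u v Huv) as [r [Hr Hb]].
  destruct i; unfold Dpt, lnf, pt in *; intros eps Heps;
  destruct (H eps Heps) as [d Hd];
  (assert (Hm : 0 < Rmin d r) by (apply Rmin_pos; [apply cond_pos|lra]));
  exists (mkposreal _ Hm); intros h Hh0 Hh; simpl in Hh;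
  (assert (Hh1 : Rabs h < d) by (eapply Rlt_le_trans; [exact Hh| apply Rmin_l]));
  (assert (Hh2 : Rabs h < r) by (eapply Rlt_le_trans; [exact Hh| apply Rmin_r]));
  specialize (Hd h Hh0 Hh1).
  - rewrite <- !Hfg; auto. apply Hb; [replace (u+h-u) with h by ring; auto|
      replace (v-v) with 0 by ring; rewrite Rabs_R0; lra].
  - rewrite <- !Hfg; auto. apply Hb; [replace (u-u) with 0 by ring; rewrite Rabs_R0; lra|
      replace (v+h-v) with h by ring; auto].
Qed.

Lemma Dpt_sum i (F : nat -> R -> R -> R) L u v m :
  (forall k, (k <= m)%nat -> Dpt i (F k) u v (L k)) ->
  Dpt i (fun a b => sum_f_R0 (fun k => F k a b) m) u v (sum_f_R0 L m).
Proof.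
  induction m; intro H; simpl.
  - apply H; lia.
  - apply Dpt_plus; [apply IHm; intros; apply H; lia | apply H; lia].
Qed.

Definition DptV i (F : R -> R -> vec) u v (L : vec) :=
  forall c, Dpt i (fun a b => F a b c) u v (L c).

Lemma pdv_DptV i F u v L : DptV i F u v L -> pdv i F u v = L.
Proof. intro H. apply functional_extensionality; intro c. apply pd_Dpt, H. Qed.

Lemma DptV_pdv i F u v : (forall c, has_pd i (fun a b => F a b c) u v) ->
  DptV i F u v (pdv i F u v).
Proof. intros H c. apply Dpt_pd, H. Qed.

Lemma DptV_vadd i F G u v L M : DptV i F u v L -> DptV i G u v M ->
  DptV i (fun a b => vadd (F a b) (G a b)) u v (vadd L M).
Proof. intros H1 H2 c; unfold vadd; apply Dpt_plus; auto. Qed.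

Lemma DptV_vsub i F G u v L M : DptV i F u v L -> DptV i G u v M ->
  DptV i (fun a b => vsub (F a b) (G a b)) u v (vsub L M).
Proof. intros H1 H2 c; unfold vsub; apply Dpt_minus; auto. Qed.

Lemma DptV_vopp i F u v L : DptV i F u v L ->
  DptV i (fun a b => vopp (F a b)) u v (vopp L).
Proof. intros H1 c; unfold vopp; apply Dpt_opp; auto. Qed.

Lemma DptV_vscale i f F u v l L : Dpt i f u v l -> DptV i F u v L ->
  DptV i (fun a b => vscale (f a b) (F a b)) u v (vadd (vscale l (F u v)) (vscale (f u v) L)).
Proof. intros H1 H2 c; unfold vscale, vadd; apply Dpt_mult; auto. Qed.

Lemma DptV_const i (Y : vec) u v : DptV i (fun _ _ => Y) u v (fun _ => 0).
Proof. intro c. apply Dpt_const. Qed.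

Lemma DptV_ext i F G u v L1 L2 : (forall a b, F a b = G a b) -> L1 = L2 ->
  DptV i F u v L1 -> DptV i G u v L2.
Proof.
  intros H -> H1. replace G with F; auto.
  apply functional_extensionality; intro; apply functional_extensionality; auto.
Qed.

Lemma DptV_loc (U : R -> R -> Prop) i F G u v L : open2 U -> U u v ->
  (forall a b, U a b -> F a b = G a b) -> DptV i F u v L -> DptV i G u v L.
Proof.
  intros HU Huv H H1 c. eapply Dpt_loc; eauto. intros a b Hab; simpl; rewrite H; auto.
Qed.

Definition sg (k : nat) : R := if Nat.eqb k 0 then -1 else 1.

Lemma mink_sym n x y : mink n x y = mink n y x.
Proof. unfold mink. apply sum_eq. intros; ring. Qed.

Lemma mink_vadd_l n x y z : mink n (vadd x y) z = mink n x z + mink n y z.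
Proof. unfold mink, vadd. induction n; simpl; [ring| rewrite IHn; ring]. Qed.
Lemma mink_vadd_r n x y z : mink n z (vadd x y) = mink n z x + mink n z y.
Proof. rewrite !(mink_sym n z). apply mink_vadd_l. Qed.
Lemma mink_vsub_l n x y z : mink n (vsub x y) z = mink n x z - mink n y z.
Proof. unfold mink, vsub. induction n; simpl; [ring| rewrite IHn; ring]. Qed.
Lemma mink_vsub_r n x y z : mink n z (vsub x y) = mink n z x - mink n z y.
Proof. rewrite !(mink_sym n z). apply mink_vsub_l. Qed.
Lemma mink_vscale_l n a x z : mink n (vscale a x) z = a * mink n x z.
Proof. unfold mink, vscale. induction n; simpl; [ring| rewrite IHn; ring]. Qed.
Lemma mink_vscale_r n a x z : mink n z (vscale a x) = a * mink n z x.
Proof. rewrite !(mink_sym n z). apply mink_vscale_l. Qed.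
Lemma mink_vopp_l n x z : mink n (vopp x) z = - mink n x z.
Proof. unfold mink, vopp. induction n; simpl; [ring| rewrite IHn; ring]. Qed.
Lemma mink_vopp_r n x z : mink n z (vopp x) = - mink n z x.
Proof. rewrite !(mink_sym n z). apply mink_vopp_l. Qed.
Lemma mink_zero_l n z : mink n (fun _ => 0) z = 0.
Proof. unfold mink. induction n; simpl; [ring| rewrite IHn; ring]. Qed.
Lemma mink_zero_r n z : mink n z (fun _ => 0) = 0.
Proof. rewrite mink_sym; apply mink_zero_l. Qed.

Lemma Dpt_mink i n F G u v L M : DptV i F u v L -> DptV i G u v M ->
  Dpt i (fun a b => mink n (F a b) (G a b)) u v (mink n L (G u v) + mink n (F u v) M).
Proof.
  intros H1 H2. unfold mink.
  eapply Dpt_ext; [intros; reflexivity| |].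
  2:{ apply (Dpt_sum i (fun k a b => (if Nat.eqb k 0 then -1 else 1) * F a b k * G a b k)
        (fun k => (if Nat.eqb k 0 then -1 else 1) * L k * G u v k
                + (if Nat.eqb k 0 then -1 else 1) * F u v k * M k)).
      intros k _. eapply Dpt_ext; [intros; reflexivity| |].
      2:{ apply Dpt_mult; [|apply H2]. eapply Dpt_ext; [intros; reflexivity| |].
          2:{ apply Dpt_mult; [apply Dpt_const|apply H1]. } reflexivity. }
      simpl; ring. }
  clear. induction n; simpl; [ring| rewrite IHn; ring].
Qed.

Lemma DptV_vsum2 i (F : nat -> R -> R -> vec) u v L0 L1 :
  DptV i (F 0%nat) u v L0 -> DptV i (F 1%nat) u v L1 ->
  DptV i (fun a b => vsum2 (fun j => F j a b)) u v (vadd L0 L1).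
Proof. intros H0 H1 c. unfold vsum2. apply Dpt_plus; [apply H0 | apply H1]. Qed.

Lemma Dpt_sum2 i (F : nat -> R -> R -> R) u v L0 L1 :
  Dpt i (F 0%nat) u v L0 -> Dpt i (F 1%nat) u v L1 ->
  Dpt i (fun a b => sum2 (fun j => F j a b)) u v (L0 + L1).
Proof. intros H0 H1. unfold sum2. apply Dpt_plus; auto. Qed.

Lemma vext (x y : vec) : (forall c : nat, x c = y c) -> x = y.
Proof. intro H. apply functional_extensionality. exact H. Qed.

Definition G2 (g00 g01 g11 a0 a1 b0 b1 : R) := a0*b0*g00 + a0*b1*g01 + a1*b0*g01 + a1*b1*g11.

Lemma frame_alg g00 g01 g11 t0 t1 w0 w1 :
  G2 g00 g01 g11 t0 t1 t0 t1 = 0 -> G2 g00 g01 g11 w0 w1 w0 w1 = 0 ->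
  G2 g00 g01 g11 t0 t1 w0 w1 = -1 ->
  forall D, D = t0*w1 - t1*w0 ->
  D <> 0 /\ (g00*g11 - g01*g01) * (D*D) = -1 /\
  g00 * (D*D) = 2*t1*w1 /\ g11 * (D*D) = 2*t0*w0 /\ g01 * (D*D) = -(t0*w1+t1*w0).
Proof.
  unfold G2. intros Ha Hc Hb D HD.
  set (a := t0*t0*g00 + t0*t1*g01 + t1*t0*g01 + t1*t1*g11) in *.
  set (c := w0*w0*g00 + w0*w1*g01 + w1*w0*g01 + w1*w1*g11) in *.
  set (b := t0*w0*g00 + t0*w1*g01 + t1*w0*g01 + t1*w1*g11) in *.
  assert (E1 : (g00*g11 - g01*g01) * (D*D) = a*c - b*b) by (unfold a,b,c; rewrite HD; ring).
  assert (E2 : g00 * (D*D) = a*w1*w1 - 2*b*w1*t1 + c*t1*t1) by (unfold a,b,c; rewrite HD; ring).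
  assert (E3 : g11 * (D*D) = a*w0*w0 - 2*b*w0*t0 + c*t0*t0) by (unfold a,b,c; rewrite HD; ring).
  assert (E4 : g01 * (D*D) = - a*w1*w0 + b*(w1*t0+t1*w0) - c*t1*t0) by (unfold a,b,c; rewrite HD; ring).
  rewrite Ha, Hb, Hc in *.
  assert (E1' : (g00*g11 - g01*g01) * (D*D) = -1) by (rewrite E1; ring).
  repeat split.
  - intro HD0. rewrite HD0 in E1'. lra.
  - exact E1'.
  - rewrite E2; ring.
  - rewrite E3; ring.
  - rewrite E4; ring.
Qed.

Lemma frame_dec g00 g01 g11 t0 t1 w0 w1 y0 y1 :
  G2 g00 g01 g11 t0 t1 t0 t1 = 0 -> G2 g00 g01 g11 w0 w1 w0 w1 = 0 ->
  G2 g00 g01 g11 t0 t1 w0 w1 = -1 ->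
  y0 = - (t0 * G2 g00 g01 g11 w0 w1 y0 y1 + w0 * G2 g00 g01 g11 t0 t1 y0 y1) /\
  y1 = - (t1 * G2 g00 g01 g11 w0 w1 y0 y1 + w1 * G2 g00 g01 g11 t0 t1 y0 y1).
Proof.
  intros H1 H2 H3.
  destruct (frame_alg _ _ _ _ _ _ _ H1 H2 H3 _ eq_refl) as [HD [E1 [E2 [E3 E4]]]].
  set (D := t0 * w1 - t1 * w0) in *.
  assert (HDD : D * D <> 0) by (apply Rmult_integral_contrapositive; auto).
  assert (F00 : g00 = 2 * t1 * w1 / (D*D)) by (rewrite <- E2; field; auto).
  assert (F11 : g11 = 2 * t0 * w0 / (D*D)) by (rewrite <- E3; field; auto).
  assert (F01 : g01 = - (t0 * w1 + t1 * w0) / (D*D)) by (rewrite <- E4; field; auto).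
  unfold G2. rewrite F00, F11, F01. unfold D. split; field; fold D; auto.
Qed.

Lemma rel_alg g00 g01 g11 d00 d01 d11 t0 t1 w0 w1 T0 T1 W0 W1 z0 z1 :
  G2 g00 g01 g11 t0 t1 t0 t1 = 0 -> G2 g00 g01 g11 w0 w1 w0 w1 = 0 ->
  G2 g00 g01 g11 t0 t1 w0 w1 = -1 ->
  G2 d00 d01 d11 t0 t1 t0 t1 + 2 * G2 g00 g01 g11 T0 T1 t0 t1 = 0 ->
  G2 d00 d01 d11 t0 t1 w0 w1 + G2 g00 g01 g11 T0 T1 w0 w1 + G2 g00 g01 g11 t0 t1 W0 W1 = 0 ->
  G2 d00 d01 d11 w0 w1 w0 w1 + 2 * G2 g00 g01 g11 w0 w1 W0 W1 = 0 ->
  d00 * t0 + g00 * T0 + (d01 * t1 + g01 * T1) = z0 ->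
  d01 * t0 + g01 * T0 + (d11 * t1 + g11 * T1) = z1 ->
  t0 * z0 + t1 * z1 = / 2 * G2 d00 d01 d11 t0 t1 t0 t1 /\
  W0 = / 2 * G2 d00 d01 d11 w0 w1 w0 w1 * t0 + (w0 * z0 + w1 * z1) * w0 /\
  W1 = / 2 * G2 d00 d01 d11 w0 w1 w0 w1 * t1 + (w0 * z0 + w1 * z1) * w1.
Proof.
  intros H1 H2 H3 Ett Etw Eww Ez0 Ez1.
  destruct (frame_dec _ _ _ _ _ _ _ W0 W1 H1 H2 H3) as [F0 F1].
  assert (Gw : G2 g00 g01 g11 w0 w1 W0 W1 = - / 2 * G2 d00 d01 d11 w0 w1 w0 w1) by lra.
  assert (Gt : G2 g00 g01 g11 t0 t1 W0 W1 = - (w0 * z0 + w1 * z1)).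
  { rewrite <- Ez0, <- Ez1. unfold G2 in *. lra. }
  split; [| split].
  - rewrite <- Ez0, <- Ez1. unfold G2 in *. lra.
  - rewrite F0 at 1. rewrite Gw, Gt. ring.
  - rewrite F1 at 1. rewrite Gw, Gt. ring.
Qed.

Lemma nu_alg t0 t1 n00 n01 n11 :
  t0 * t0 + t1 * t1 <> 0 -> t0 * n00 + t1 * n01 = 0 -> t0 * n01 + t1 * n11 = 0 ->
  exists c, n00 = c * (t1 * t1) /\ n01 = - c * (t0 * t1) /\ n11 = c * (t0 * t0).
Proof.
  intros Hs R0 R1. exists ((n00 + n11) / (t0 * t0 + t1 * t1)).
  assert (A : n00 * (t0 * t0) = n11 * (t1 * t1)).
  { replace (n00 * (t0 * t0)) with (t0 * (t0 * n00 + t1 * n01) - t0 * t1 * n01) by ring.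
    replace (n11 * (t1 * t1)) with (t1 * (t0 * n01 + t1 * n11) - t0 * t1 * n01) by ring.
    rewrite R0, R1. ring. }
  repeat split; apply (Rmult_eq_reg_r (t0 * t0 + t1 * t1)); auto; field_simplify; auto.
  - nra.
  - replace (n01 * t0 ^ 2 + n01 * t1 ^ 2) with (t0 * (t0 * n01) + t1 * (t1 * n01)) by ring.
    assert (B0 : t1 * n01 = - t0 * n00) by lra.
    assert (B1 : t0 * n01 = - t1 * n11) by lra.
    rewrite B0, B1. nra.
  - nra.
Qed.

Module SchwarzM.
Import Coquelicot.Coquelicot.

Lemma Derive_Dpt0 f a b l : Dpt 0 f a b l -> Derive (fun z => f z b) a = l.
Proof. intro H. apply is_derive_unique. apply is_derive_Reals. exact H. Qed.
Lemma Derive_Dpt1 f a b l : Dpt 1 f a b l -> Derive (fun z => f a z) b = l.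
Proof. intro H. apply is_derive_unique. apply is_derive_Reals. exact H. Qed.
Lemma exd_Dpt0 f a b l : Dpt 0 f a b l -> ex_derive (fun z => f z b) a.
Proof. intro H. exists l. apply is_derive_Reals. exact H. Qed.
Lemma exd_Dpt1 f a b l : Dpt 1 f a b l -> ex_derive (fun z => f a z) b.
Proof. intro H. exists l. apply is_derive_Reals. exact H. Qed.

Lemma schwarz (U : R -> R -> Prop) f u v : open2 U -> smooth_on U f -> U u v ->
  pd 0 (pd 1 f) u v = pd 1 (pd 0 f) u v.
Proof.
  intros HU Hs Huv.
  assert (Hp : forall w i a b, U a b -> Dpt i (iter_pd w f) a b (pd i (iter_pd w f) a b))
    by (intros w i a b Hab; apply Dpt_pd; apply (proj1 (Hs w)); auto).
  set (d1 := fun a b => Derive (fun t => f a t) b).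
  set (d0 := fun a b => Derive (fun t => f t b) a).
  assert (E1 : forall a b, U a b -> pd 1 f a b = d1 a b).
  { intros a b Hab. unfold d1. symmetry. apply Derive_Dpt1. apply (Hp nil 1%nat a b Hab). }
  assert (E0 : forall a b, U a b -> pd 0 f a b = d0 a b).
  { intros a b Hab. unfold d0. symmetry. apply Derive_Dpt0. apply (Hp nil 0%nat a b Hab). }
  assert (D1 : forall a b, U a b -> Dpt 0 d1 a b (pd 0 (pd 1 f) a b)).
  { intros a b Hab. eapply Dpt_loc; eauto. apply (Hp (1%nat::nil) 0%nat a b Hab). }
  assert (D0 : forall a b, U a b -> Dpt 1 d0 a b (pd 1 (pd 0 f) a b)).
  { intros a b Hab. eapply Dpt_loc; eauto. apply (Hp (0%nat::nil) 1%nat a b Hab). }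
  assert (F1 : forall a b, U a b -> Derive (fun z => Derive (fun t => f z t) b) a = pd 0 (pd 1 f) a b).
  { intros a b Hab. apply (Derive_Dpt0 d1). auto. }
  assert (F0 : forall a b, U a b -> Derive (fun z => Derive (fun t => f t z) a) b = pd 1 (pd 0 f) a b).
  { intros a b Hab. apply (Derive_Dpt1 d0). auto. }
  destruct (HU u v Huv) as [r [Hr Hb]].
  rewrite <- F1, <- F0 by auto.
  apply Schwarz.
  - exists (mkposreal r Hr). intros a b Ha Hb'. simpl in Ha, Hb'.
    assert (Hab : U a b) by (apply Hb; assumption).
    split; [|split; [|split]].
    + exact (exd_Dpt0 f a b _ (Hp nil 0%nat a b Hab)).
    + exact (exd_Dpt1 f a b _ (Hp nil 1%nat a b Hab)).
    + exact (exd_Dpt0 d1 a b _ (D1 a b Hab)).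
    + exact (exd_Dpt1 d0 a b _ (D0 a b Hab)).
  - intro eps. destruct (proj2 (Hs (0%nat::1%nat::nil)) u v Huv eps (cond_pos eps)) as [d [Hd Hc]].
    assert (Hm : 0 < Rmin d r) by (apply Rmin_pos; lra).
    exists (mkposreal _ Hm). intros a b Ha Hb'. simpl in Ha, Hb'.
    assert (Ha1 : Rabs (a - u) < d) by (eapply Rlt_le_trans; [exact Ha| apply Rmin_l]).
    assert (Ha2 : Rabs (a - u) < r) by (eapply Rlt_le_trans; [exact Ha| apply Rmin_r]).
    assert (Hb1 : Rabs (b - v) < d) by (eapply Rlt_le_trans; [exact Hb'| apply Rmin_l]).
    assert (Hb2 : Rabs (b - v) < r) by (eapply Rlt_le_trans; [exact Hb'| apply Rmin_r]).
    rewrite (F1 a b), (F1 u v) by (assumption || (apply Hb; assumption)). apply Hc; try assumption; apply Hb; assumption.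
  - intro eps. destruct (proj2 (Hs (1%nat::0%nat::nil)) u v Huv eps (cond_pos eps)) as [d [Hd Hc]].
    assert (Hm : 0 < Rmin d r) by (apply Rmin_pos; lra).
    exists (mkposreal _ Hm). intros a b Ha Hb'. simpl in Ha, Hb'.
    assert (Ha1 : Rabs (a - u) < d) by (eapply Rlt_le_trans; [exact Ha| apply Rmin_l]).
    assert (Ha2 : Rabs (a - u) < r) by (eapply Rlt_le_trans; [exact Ha| apply Rmin_r]).
    assert (Hb1 : Rabs (b - v) < d) by (eapply Rlt_le_trans; [exact Hb'| apply Rmin_l]).
    assert (Hb2 : Rabs (b - v) < r) by (eapply Rlt_le_trans; [exact Hb'| apply Rmin_r]).
    rewrite (F0 a b), (F0 u v) by (assumption || (apply Hb; assumption)). apply Hc; try assumption; apply Hb; assumption.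
Qed.

End SchwarzM.
Import SchwarzM.

Lemma iter_pd_app w1 w2 f : iter_pd (w1 ++ w2) f = iter_pd w1 (iter_pd w2 f).
Proof. induction w1; simpl; congruence. Qed.

Lemma smooth_pd U f i : smooth_on U f -> smooth_on U (pd i f).
Proof.
  intros H w. replace (iter_pd w (pd i f)) with (iter_pd (w ++ i :: nil) f).
  apply H. rewrite iter_pd_app. reflexivity.
Qed.

Lemma pd_loc U i f g u v : open2 U -> U u v -> (forall a b, U a b -> f a b = g a b) ->
  has_pd i f u v -> pd i f u v = pd i g u v.
Proof.
  intros HU Huv H Hf. symmetry. apply pd_Dpt. eapply Dpt_loc; eauto. apply Dpt_pd; auto.
Qed.

Section Jets.
Variable n : nat.
Variable U : R -> R -> Prop.
Variable X : R -> R -> vec.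
Hypothesis HU : open2 U.
Hypothesis HX : forall c, smooth_on U (fun a b => X a b c).

Lemma HXw c w i a b : U a b -> has_pd i (iter_pd w (fun a b => X a b c)) a b.
Proof. intro H. apply (proj1 (HX c w)); auto. Qed.

Lemma D_X0 k a b : U a b -> DptV k X a b (Xd X k a b).
Proof. intro H. apply DptV_pdv. intro c. exact (HXw c nil k a b H). Qed.
Lemma D_X1 k i a b : U a b -> DptV k (Xd X i) a b (pdv k (Xd X i) a b).
Proof. intro H. apply DptV_pdv. intro c. exact (HXw c (i::nil) k a b H). Qed.
Lemma D_X2 k i j a b : U a b -> DptV k (pdv i (Xd X j)) a b (pdv k (pdv i (Xd X j)) a b).
Proof. intro H. apply DptV_pdv. intro c. exact (HXw c (i::j::nil) k a b H). Qed.

Lemma sym2 a b : U a b -> pdv 1 (Xd X 0) a b = pdv 0 (Xd X 1) a b.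
Proof.
  intro H. apply functional_extensionality; intro c. unfold pdv, Xd.
  symmetry. apply (schwarz U (fun a b => X a b c)); auto.
Qed.

Lemma sym3a k a b : U a b -> pdv k (pdv 1 (Xd X 0)) a b = pdv k (pdv 0 (Xd X 1)) a b.
Proof.
  intro H. apply functional_extensionality; intro c. unfold pdv at 1 3.
  apply (pd_loc U); auto.
  - intros a' b' H'. rewrite (sym2 a' b' H'). reflexivity.
  - exact (HXw c (1%nat::0%nat::nil) k a b H).
Qed.

Lemma sym3b j a b : U a b -> pdv 1 (pdv 0 (Xd X j)) a b = pdv 0 (pdv 1 (Xd X j)) a b.
Proof.
  intro H. apply functional_extensionality; intro c. unfold pdv, Xd.
  symmetry. apply (schwarz U (pd j (fun a b => X a b c))); auto. apply smooth_pd; auto.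
Qed.

End Jets.

Ltac dpt_step atoms :=
  first [ atoms
        | eapply Dpt_const
        | eapply Dpt_div
        | eapply Dpt_plus
        | eapply Dpt_minus
        | eapply Dpt_mult
        | eapply Dpt_opp
        | eapply Dpt_mink
        | eapply DptV_vsum2
        | eapply Dpt_sum2
        | eapply DptV_vadd
        | eapply DptV_vsub
        | eapply DptV_vscale
        | eapply DptV_vopp
        | eapply DptV_const ].

Section Geo.
Variable n : nat.
Variable U : R -> R -> Prop.
Variable X : R -> R -> vec.
Hypothesis HU : open2 U.
Hypothesis HX : forall c, smooth_on U (fun a b => X a b c).

Lemma D_gmet k i j a b : U a b -> Dpt k (gmet n X i j) a b
  (mink n (pdv k (Xd X i) a b) (Xd X j a b) + mink n (Xd X i a b) (pdv k (Xd X j) a b)).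
Proof. intro H. unfold gmet. apply Dpt_mink; apply (D_X1 U X HX); auto. Qed.

Lemma D_pdg k i j l a b : U a b -> Dpt k (pd i (gmet n X j l)) a b
  (mink n (pdv k (pdv i (Xd X j)) a b) (Xd X l a b) + mink n (pdv i (Xd X j) a b) (pdv k (Xd X l) a b)
   + (mink n (pdv k (Xd X j) a b) (pdv i (Xd X l) a b) + mink n (Xd X j a b) (pdv k (pdv i (Xd X l)) a b))).
Proof.
  intro H. eapply (Dpt_loc U k (fun a b => mink n (pdv i (Xd X j) a b) (Xd X l a b)
      + mink n (Xd X j a b) (pdv i (Xd X l) a b))); auto.
  - intros a' b' H'. symmetry. apply pd_Dpt. apply D_gmet; auto.
  - apply Dpt_plus; apply Dpt_mink; auto using (D_X1 U X HX), (D_X2 U X HX).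
Qed.

End Geo.

Section Geo2.
Variable n : nat.
Variable U : R -> R -> Prop.
Variable X : R -> R -> vec.
Hypothesis HU : open2 U.
Hypothesis HX : forall c, smooth_on U (fun a b => X a b c).

Ltac jnorm u v H :=
  try rewrite (sym3b U X HU HX 0 u v H);
  try rewrite (sym3a U X HU HX 0 u v H);
  try rewrite (sym3a U X HU HX 1 u v H);
  try rewrite (sym3b U X HU HX 1 u v H);
  try rewrite (sym2 U X HU HX u v H).

Ltac msym u v :=
  repeat rewrite (mink_sym n (Xd X 1 u v) (Xd X 0 u v));
  repeat rewrite (mink_sym n (pdv 0 (Xd X 0) u v) (Xd X 0 u v));
  repeat rewrite (mink_sym n (pdv 0 (Xd X 1) u v) (Xd X 0 u v));
  repeat rewrite (mink_sym n (pdv 1 (Xd X 1) u v) (Xd X 0 u v));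
  repeat rewrite (mink_sym n (pdv 0 (pdv 0 (Xd X 0)) u v) (Xd X 0 u v));
  repeat rewrite (mink_sym n (pdv 0 (pdv 0 (Xd X 1)) u v) (Xd X 0 u v));
  repeat rewrite (mink_sym n (pdv 0 (pdv 1 (Xd X 1)) u v) (Xd X 0 u v));
  repeat rewrite (mink_sym n (pdv 1 (pdv 1 (Xd X 1)) u v) (Xd X 0 u v));
  repeat rewrite (mink_sym n (pdv 0 (Xd X 0) u v) (Xd X 1 u v));
  repeat rewrite (mink_sym n (pdv 0 (Xd X 1) u v) (Xd X 1 u v));
  repeat rewrite (mink_sym n (pdv 1 (Xd X 1) u v) (Xd X 1 u v));
  repeat rewrite (mink_sym n (pdv 0 (pdv 0 (Xd X 0)) u v) (Xd X 1 u v));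
  repeat rewrite (mink_sym n (pdv 0 (pdv 0 (Xd X 1)) u v) (Xd X 1 u v));
  repeat rewrite (mink_sym n (pdv 0 (pdv 1 (Xd X 1)) u v) (Xd X 1 u v));
  repeat rewrite (mink_sym n (pdv 1 (pdv 1 (Xd X 1)) u v) (Xd X 1 u v));
  repeat rewrite (mink_sym n (pdv 0 (Xd X 1) u v) (pdv 0 (Xd X 0) u v));
  repeat rewrite (mink_sym n (pdv 1 (Xd X 1) u v) (pdv 0 (Xd X 0) u v));
  repeat rewrite (mink_sym n (pdv 0 (pdv 0 (Xd X 0)) u v) (pdv 0 (Xd X 0) u v));
  repeat rewrite (mink_sym n (pdv 0 (pdv 0 (Xd X 1)) u v) (pdv 0 (Xd X 0) u v));
  repeat rewrite (mink_sym n (pdv 0 (pdv 1 (Xd X 1)) u v) (pdv 0 (Xd X 0) u v));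
  repeat rewrite (mink_sym n (pdv 1 (pdv 1 (Xd X 1)) u v) (pdv 0 (Xd X 0) u v));
  repeat rewrite (mink_sym n (pdv 1 (Xd X 1) u v) (pdv 0 (Xd X 1) u v));
  repeat rewrite (mink_sym n (pdv 0 (pdv 0 (Xd X 0)) u v) (pdv 0 (Xd X 1) u v));
  repeat rewrite (mink_sym n (pdv 0 (pdv 0 (Xd X 1)) u v) (pdv 0 (Xd X 1) u v));
  repeat rewrite (mink_sym n (pdv 0 (pdv 1 (Xd X 1)) u v) (pdv 0 (Xd X 1) u v));
  repeat rewrite (mink_sym n (pdv 1 (pdv 1 (Xd X 1)) u v) (pdv 0 (Xd X 1) u v));
  repeat rewrite (mink_sym n (pdv 0 (pdv 0 (Xd X 0)) u v) (pdv 1 (Xd X 1) u v));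
  repeat rewrite (mink_sym n (pdv 0 (pdv 0 (Xd X 1)) u v) (pdv 1 (Xd X 1) u v));
  repeat rewrite (mink_sym n (pdv 0 (pdv 1 (Xd X 1)) u v) (pdv 1 (Xd X 1) u v));
  repeat rewrite (mink_sym n (pdv 1 (pdv 1 (Xd X 1)) u v) (pdv 1 (Xd X 1) u v));
  repeat rewrite (mink_sym n (pdv 0 (pdv 0 (Xd X 1)) u v) (pdv 0 (pdv 0 (Xd X 0)) u v));
  repeat rewrite (mink_sym n (pdv 0 (pdv 1 (Xd X 1)) u v) (pdv 0 (pdv 0 (Xd X 0)) u v));
  repeat rewrite (mink_sym n (pdv 1 (pdv 1 (Xd X 1)) u v) (pdv 0 (pdv 0 (Xd X 0)) u v));
  repeat rewrite (mink_sym n (pdv 0 (pdv 1 (Xd X 1)) u v) (pdv 0 (pdv 0 (Xd X 1)) u v));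
  repeat rewrite (mink_sym n (pdv 1 (pdv 1 (Xd X 1)) u v) (pdv 0 (pdv 0 (Xd X 1)) u v));
  repeat rewrite (mink_sym n (pdv 1 (pdv 1 (Xd X 1)) u v) (pdv 0 (pdv 1 (Xd X 1)) u v));
  idtac.

Ltac datoms u v H :=
  first [ apply (D_gmet n U X HX _ _ _ u v H)
        | apply (D_pdg n U X HU HX _ _ _ _ u v H) ].

Lemma Kgauss_coord u v : U u v -> gdet n X u v <> 0 ->
  Kgauss n X u v =
  (mink n (pdv 0 (Xd X 0) u v) (pdv 1 (Xd X 1) u v) - mink n (pdv 0 (Xd X 1) u v) (pdv 0 (Xd X 1) u v)
   - sum2 (fun a => sum2 (fun b => ginv n X a b u v *
       (mink n (pdv 0 (Xd X 0) u v) (Xd X a u v) * mink n (pdv 1 (Xd X 1) u v) (Xd X b u v)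
        - mink n (pdv 0 (Xd X 1) u v) (Xd X a u v) * mink n (pdv 0 (Xd X 1) u v) (Xd X b u v)))))
  / gdet n X u v.
Proof.
  intros H Hd.
  unfold Kgauss, Rcoef, sum2.
  erewrite (pd_Dpt 0 (Gam n X 0 1 1) u v).
  2:{ unfold Gam, sum2; cbn [ginv]; unfold gdet. repeat (dpt_step ltac:(datoms u v H)). all: exact Hd. }
  erewrite (pd_Dpt 0 (Gam n X 1 1 1) u v).
  2:{ unfold Gam, sum2; cbn [ginv]; unfold gdet. repeat (dpt_step ltac:(datoms u v H)). all: exact Hd. }
  erewrite (pd_Dpt 1 (Gam n X 0 0 1) u v).
  2:{ unfold Gam, sum2; cbn [ginv]; unfold gdet. repeat (dpt_step ltac:(datoms u v H)). all: exact Hd. }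
  erewrite (pd_Dpt 1 (Gam n X 1 0 1) u v).
  2:{ unfold Gam, sum2; cbn [ginv]; unfold gdet. repeat (dpt_step ltac:(datoms u v H)). all: exact Hd. }
  unfold Gam, sum2. cbn [ginv].
  rewrite !(pd_Dpt _ _ _ _ _ (D_gmet n U X HX _ _ _ u v H)).
  unfold gdet in *. unfold gmet in *.
  jnorm u v H. jnorm u v H. jnorm u v H.
  msym u v.
  rewrite (mink_sym n (Xd X 1 u v) (Xd X 0 u v)) in Hd. unfold Rsqr. field. exact Hd.
Qed.
End Geo2.

Lemma vsum2_vadd (f : nat -> vec) : vsum2 f = vadd (f 0%nat) (f 1%nat).
Proof. reflexivity. Qed.

Section Alg.
Variable n : nat.
Variable X : R -> R -> vec.

Lemma tvec_eq a u v : tvec X a u v = vadd (vscale (a 0%nat) (Xd X 0 u v)) (vscale (a 1%nat) (Xd X 1 u v)).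
Proof. reflexivity. Qed.
Lemma tanp_eq Y u v : tanp n X Y u v =
  vadd (vscale (tcoef n X Y u v 0) (Xd X 0 u v)) (vscale (tcoef n X Y u v 1) (Xd X 1 u v)).
Proof. reflexivity. Qed.
Lemma norp_eq Y u v : norp n X Y u v = vsub Y (tanp n X Y u v).
Proof. reflexivity. Qed.
Lemma tcoef_eq Y u v i : tcoef n X Y u v i =
  ginv n X i 0 u v * mink n Y (Xd X 0 u v) + ginv n X i 1 u v * mink n Y (Xd X 1 u v).
Proof. reflexivity. Qed.

Lemma mink_tvec a b u v : mink n (tvec X a u v) (tvec X b u v) =
  G2 (gmet n X 0 0 u v) (gmet n X 0 1 u v) (gmet n X 1 1 u v) (a 0%nat) (a 1%nat) (b 0%nat) (b 1%nat).
Proof.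
  rewrite !tvec_eq. rewrite !mink_vadd_l, !mink_vadd_r, !mink_vscale_l, !mink_vscale_r.
  unfold G2, gmet. rewrite (mink_sym n (Xd X 1 u v) (Xd X 0 u v)). ring.
Qed.


Lemma mink_norp_X0 Y u v : gdet n X u v <> 0 -> mink n (norp n X Y u v) (Xd X 0 u v) = 0.
Proof.
  intro Hd. rewrite norp_eq, tanp_eq, !tcoef_eq.
  rewrite mink_vsub_l, mink_vadd_l, !mink_vscale_l.
  unfold gdet, gmet in Hd. cbn [ginv]; unfold gdet, gmet.
  rewrite !(mink_sym n (Xd X 1 u v) (Xd X 0 u v)) in *. field. auto.
Qed.
Lemma mink_norp_X1 Y u v : gdet n X u v <> 0 -> mink n (norp n X Y u v) (Xd X 1 u v) = 0.
Proof.
  intro Hd. rewrite norp_eq, tanp_eq, !tcoef_eq.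
  rewrite mink_vsub_l, mink_vadd_l, !mink_vscale_l.
  unfold gdet, gmet in Hd. cbn [ginv]; unfold gdet, gmet.
  rewrite !(mink_sym n (Xd X 1 u v) (Xd X 0 u v)) in *. field. auto.
Qed.

Lemma mink_norp_tvec Y a u v : gdet n X u v <> 0 -> mink n (norp n X Y u v) (tvec X a u v) = 0.
Proof.
  intro Hd. rewrite tvec_eq, mink_vadd_r, !mink_vscale_r, mink_norp_X0, mink_norp_X1 by auto. ring.
Qed.

Lemma mink_norp_l Y Y' u v : gdet n X u v <> 0 ->
  mink n (norp n X Y u v) Y' = mink n (norp n X Y u v) (norp n X Y' u v).
Proof.
  intro Hd. rewrite (norp_eq Y'). rewrite mink_vsub_r. unfold tanp. rewrite mink_norp_tvec by auto. ring.
Qed.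

Lemma tcoef_norp Y u v i : gdet n X u v <> 0 -> tcoef n X (norp n X Y u v) u v i = 0.
Proof. intro Hd. rewrite tcoef_eq, mink_norp_X0, mink_norp_X1 by auto. ring. Qed.

Lemma norp_norp Y u v : gdet n X u v <> 0 -> norp n X (norp n X Y u v) u v = norp n X Y u v.
Proof.
  intro Hd. rewrite (norp_eq (norp n X Y u v)), tanp_eq, !tcoef_norp by auto.
  apply functional_extensionality; intro c. unfold vsub, vadd, vscale. ring.
Qed.

Lemma tcoef_vadd Y Y' u v i : tcoef n X (vadd Y Y') u v i = tcoef n X Y u v i + tcoef n X Y' u v i.
Proof. rewrite !tcoef_eq, !mink_vadd_l. ring. Qed.
Lemma tcoef_vsub Y Y' u v i : tcoef n X (vsub Y Y') u v i = tcoef n X Y u v i - tcoef n X Y' u v i.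
Proof. rewrite !tcoef_eq, !mink_vsub_l. ring. Qed.
Lemma tcoef_vscale a Y u v i : tcoef n X (vscale a Y) u v i = a * tcoef n X Y u v i.
Proof. rewrite !tcoef_eq, !mink_vscale_l. ring. Qed.
Lemma tcoef_vopp Y u v i : tcoef n X (vopp Y) u v i = - tcoef n X Y u v i.
Proof. rewrite !tcoef_eq, !mink_vopp_l. ring. Qed.
Lemma tcoef_zero u v i : tcoef n X (fun _ => 0) u v i = 0.
Proof. rewrite !tcoef_eq, !mink_zero_l. ring. Qed.

Lemma norp_vadd Y Y' u v : norp n X (vadd Y Y') u v = vadd (norp n X Y u v) (norp n X Y' u v).
Proof. apply functional_extensionality; intro c. rewrite !norp_eq, !tanp_eq, !tcoef_vadd.
  unfold vsub, vadd, vscale. ring. Qed.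
Lemma norp_vsub Y Y' u v : norp n X (vsub Y Y') u v = vsub (norp n X Y u v) (norp n X Y' u v).
Proof. apply functional_extensionality; intro c. rewrite !norp_eq, !tanp_eq, !tcoef_vsub.
  unfold vsub, vadd, vscale. ring. Qed.
Lemma norp_vscale a Y u v : norp n X (vscale a Y) u v = vscale a (norp n X Y u v).
Proof. apply functional_extensionality; intro c. rewrite !norp_eq, !tanp_eq, !tcoef_vscale.
  unfold vsub, vadd, vscale. ring. Qed.
Lemma norp_vopp Y u v : norp n X (vopp Y) u v = vopp (norp n X Y u v).
Proof. apply functional_extensionality; intro c. rewrite !norp_eq, !tanp_eq, !tcoef_vopp.
  unfold vsub, vadd, vscale, vopp. ring. Qed.
Lemma norp_zero u v : norp n X (fun _ => 0) u v = (fun _ => 0).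
Proof. apply functional_extensionality; intro c. rewrite !norp_eq, !tanp_eq, !tcoef_zero.
  unfold vsub, vadd, vscale. ring. Qed.
Lemma norp_X0 u v : gdet n X u v <> 0 -> norp n X (Xd X 0 u v) u v = (fun _ => 0).
Proof.
  intro Hd. apply functional_extensionality; intro c. rewrite !norp_eq, !tanp_eq, !tcoef_eq.
  unfold gdet, gmet in Hd. cbn [ginv]; unfold gdet, gmet.
  rewrite !(mink_sym n (Xd X 1 u v) (Xd X 0 u v)) in *.
  unfold vsub, vadd, vscale. field. auto.
Qed.
Lemma norp_X1 u v : gdet n X u v <> 0 -> norp n X (Xd X 1 u v) u v = (fun _ => 0).
Proof.
  intro Hd. apply functional_extensionality; intro c. rewrite !norp_eq, !tanp_eq, !tcoef_eq.
  unfold gdet, gmet in Hd. cbn [ginv]; unfold gdet, gmet.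
  rewrite !(mink_sym n (Xd X 1 u v) (Xd X 0 u v)) in *.
  unfold vsub, vadd, vscale. field. auto.
Qed.

End Alg.

Section Frame.
Variable n : nat.
Variable X : R -> R -> vec.

Lemma frame_geo (t w : nat -> R) u v :
  mink n (tvec X t u v) (tvec X t u v) = 0 ->
  mink n (tvec X w u v) (tvec X w u v) = 0 ->
  mink n (tvec X t u v) (tvec X w u v) = -1 ->
  forall D, D = t 0%nat * w 1%nat - t 1%nat * w 0%nat ->
  D <> 0 /\ gdet n X u v * (D*D) = -1 /\
  gmet n X 0 0 u v = 2 * t 1%nat * w 1%nat / (D*D) /\
  gmet n X 1 1 u v = 2 * t 0%nat * w 0%nat / (D*D) /\
  gmet n X 0 1 u v = - (t 0%nat * w 1%nat + t 1%nat * w 0%nat) / (D*D) /\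
  gmet n X 1 0 u v = - (t 0%nat * w 1%nat + t 1%nat * w 0%nat) / (D*D) /\
  gdet n X u v = -1 / (D*D) /\
  ginv n X 0 0 u v = - (t 0%nat * w 0%nat + w 0%nat * t 0%nat) /\
  ginv n X 0 1 u v = - (t 0%nat * w 1%nat + w 0%nat * t 1%nat) /\
  ginv n X 1 0 u v = - (t 1%nat * w 0%nat + w 1%nat * t 0%nat) /\
  ginv n X 1 1 u v = - (t 1%nat * w 1%nat + w 1%nat * t 1%nat).
Proof.
  rewrite !mink_tvec. intros H1 H2 H3 D HD.
  destruct (frame_alg _ _ _ _ _ _ _ H1 H2 H3 D HD) as [HD0 [E1 [E2 [E3 E4]]]].
  assert (HDD : D * D <> 0) by (apply Rmult_integral_contrapositive; auto).
  assert (G10 : gmet n X 1 0 u v = gmet n X 0 1 u v) by (unfold gmet; apply mink_sym).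
  assert (F00 : gmet n X 0 0 u v = 2 * t 1%nat * w 1%nat / (D*D)) by (rewrite <- E2; field; auto).
  assert (F11 : gmet n X 1 1 u v = 2 * t 0%nat * w 0%nat / (D*D)) by (rewrite <- E3; field; auto).
  assert (F01 : gmet n X 0 1 u v = - (t 0%nat * w 1%nat + t 1%nat * w 0%nat) / (D*D)) by (rewrite <- E4; field; auto).
  assert (Fd : gdet n X u v = -1 / (D*D)).
  { unfold gdet. rewrite G10. rewrite <- E1. field; auto. }
  repeat split; auto.
  - rewrite Fd; field; auto.
  - rewrite G10; auto.
  - cbn [ginv]. rewrite Fd, F11. field; repeat split; auto.
  - cbn [ginv]. rewrite Fd, F01. field; repeat split; auto.
  - cbn [ginv]. rewrite Fd, G10, F01. field; repeat split; auto.
  - cbn [ginv]. rewrite Fd, F00. field; repeat split; auto.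
Qed.

End Frame.

Section Geo3.
Variable n : nat.
Variable U : R -> R -> Prop.
Variable X : R -> R -> vec.
Hypothesis HU : open2 U.
Hypothesis HX : forall c, smooth_on U (fun a b => X a b c).

Ltac jnorm u v H :=
  try rewrite (sym3b U X HU HX 0 u v H);
  try rewrite (sym3a U X HU HX 0 u v H);
  try rewrite (sym3a U X HU HX 1 u v H);
  try rewrite (sym3b U X HU HX 1 u v H);
  try rewrite (sym2 U X HU HX u v H).

Ltac msym u v :=
  repeat rewrite (mink_sym n (Xd X 1 u v) (Xd X 0 u v));
  repeat rewrite (mink_sym n (pdv 0 (Xd X 0) u v) (Xd X 0 u v));
  repeat rewrite (mink_sym n (pdv 0 (Xd X 1) u v) (Xd X 0 u v));
  repeat rewrite (mink_sym n (pdv 1 (Xd X 1) u v) (Xd X 0 u v));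
  repeat rewrite (mink_sym n (pdv 0 (pdv 0 (Xd X 0)) u v) (Xd X 0 u v));
  repeat rewrite (mink_sym n (pdv 0 (pdv 0 (Xd X 1)) u v) (Xd X 0 u v));
  repeat rewrite (mink_sym n (pdv 0 (pdv 1 (Xd X 1)) u v) (Xd X 0 u v));
  repeat rewrite (mink_sym n (pdv 1 (pdv 1 (Xd X 1)) u v) (Xd X 0 u v));
  repeat rewrite (mink_sym n (pdv 0 (Xd X 0) u v) (Xd X 1 u v));
  repeat rewrite (mink_sym n (pdv 0 (Xd X 1) u v) (Xd X 1 u v));
  repeat rewrite (mink_sym n (pdv 1 (Xd X 1) u v) (Xd X 1 u v));
  repeat rewrite (mink_sym n (pdv 0 (pdv 0 (Xd X 0)) u v) (Xd X 1 u v));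
  repeat rewrite (mink_sym n (pdv 0 (pdv 0 (Xd X 1)) u v) (Xd X 1 u v));
  repeat rewrite (mink_sym n (pdv 0 (pdv 1 (Xd X 1)) u v) (Xd X 1 u v));
  repeat rewrite (mink_sym n (pdv 1 (pdv 1 (Xd X 1)) u v) (Xd X 1 u v));
  repeat rewrite (mink_sym n (pdv 0 (Xd X 1) u v) (pdv 0 (Xd X 0) u v));
  repeat rewrite (mink_sym n (pdv 1 (Xd X 1) u v) (pdv 0 (Xd X 0) u v));
  repeat rewrite (mink_sym n (pdv 0 (pdv 0 (Xd X 0)) u v) (pdv 0 (Xd X 0) u v));
  repeat rewrite (mink_sym n (pdv 0 (pdv 0 (Xd X 1)) u v) (pdv 0 (Xd X 0) u v));
  repeat rewrite (mink_sym n (pdv 0 (pdv 1 (Xd X 1)) u v) (pdv 0 (Xd X 0) u v));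
  repeat rewrite (mink_sym n (pdv 1 (pdv 1 (Xd X 1)) u v) (pdv 0 (Xd X 0) u v));
  repeat rewrite (mink_sym n (pdv 1 (Xd X 1) u v) (pdv 0 (Xd X 1) u v));
  repeat rewrite (mink_sym n (pdv 0 (pdv 0 (Xd X 0)) u v) (pdv 0 (Xd X 1) u v));
  repeat rewrite (mink_sym n (pdv 0 (pdv 0 (Xd X 1)) u v) (pdv 0 (Xd X 1) u v));
  repeat rewrite (mink_sym n (pdv 0 (pdv 1 (Xd X 1)) u v) (pdv 0 (Xd X 1) u v));
  repeat rewrite (mink_sym n (pdv 1 (pdv 1 (Xd X 1)) u v) (pdv 0 (Xd X 1) u v));
  repeat rewrite (mink_sym n (pdv 0 (pdv 0 (Xd X 0)) u v) (pdv 1 (Xd X 1) u v));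
  repeat rewrite (mink_sym n (pdv 0 (pdv 0 (Xd X 1)) u v) (pdv 1 (Xd X 1) u v));
  repeat rewrite (mink_sym n (pdv 0 (pdv 1 (Xd X 1)) u v) (pdv 1 (Xd X 1) u v));
  repeat rewrite (mink_sym n (pdv 1 (pdv 1 (Xd X 1)) u v) (pdv 1 (Xd X 1) u v));
  repeat rewrite (mink_sym n (pdv 0 (pdv 0 (Xd X 1)) u v) (pdv 0 (pdv 0 (Xd X 0)) u v));
  repeat rewrite (mink_sym n (pdv 0 (pdv 1 (Xd X 1)) u v) (pdv 0 (pdv 0 (Xd X 0)) u v));
  repeat rewrite (mink_sym n (pdv 1 (pdv 1 (Xd X 1)) u v) (pdv 0 (pdv 0 (Xd X 0)) u v));
  repeat rewrite (mink_sym n (pdv 0 (pdv 1 (Xd X 1)) u v) (pdv 0 (pdv 0 (Xd X 1)) u v));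
  repeat rewrite (mink_sym n (pdv 1 (pdv 1 (Xd X 1)) u v) (pdv 0 (pdv 0 (Xd X 1)) u v));
  repeat rewrite (mink_sym n (pdv 1 (pdv 1 (Xd X 1)) u v) (pdv 0 (pdv 1 (Xd X 1)) u v));
  idtac.

Lemma mink_nn Y Y' u v : gdet n X u v <> 0 ->
  mink n (norp n X Y u v) (norp n X Y' u v) =
  mink n Y Y' - (tcoef n X Y u v 0 * mink n (Xd X 0 u v) Y' + tcoef n X Y u v 1 * mink n (Xd X 1 u v) Y').
Proof.
  intro Hd. rewrite <- mink_norp_l by auto. rewrite norp_eq, tanp_eq.
  rewrite mink_vsub_l, mink_vadd_l, !mink_vscale_l. ring.
Qed.

Lemma IIc_sym u v : U u v -> IIc n X 1 0 u v = IIc n X 0 1 u v.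
Proof. intro H. unfold IIc. rewrite (sym2 U X HU HX u v H). reflexivity. Qed.

Lemma ident3 (Z : vec) (w : nat -> R) u v : U u v ->
  mink n (tanp n X Z u v) (tanp n X Z u v) = 0 ->
  mink n (tvec X w u v) (tvec X w u v) = 0 ->
  mink n (tanp n X Z u v) (tvec X w u v) = -1 ->
  Kgauss n X u v = mink n (Hvec n X u v) (Hvec n X u v)
     - mink n (II n X w w u v) (II n X (ZTc n X Z u v) (ZTc n X Z u v) u v).
Proof.
  intros H Htt Hww Htw. unfold tanp in *. unfold ZTc.
  set (t := tcoef n X Z u v) in *.
  destruct (frame_geo n X t w u v Htt Hww Htw _ eq_refl)
    as [HD [Hdd [_ [_ [_ [_ [Hdet [I00 [I01 [I10 I11]]]]]]]]]].
  assert (Hd : gdet n X u v <> 0).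
  { intro E. rewrite E in Hdd. lra. }
  rewrite (Kgauss_coord n U X HU HX u v H Hd).
  unfold Hvec, II. repeat (rewrite vsum2_vadd; cbv beta).
  repeat first [rewrite mink_vadd_l | rewrite mink_vadd_r | rewrite mink_vscale_l | rewrite mink_vscale_r].
  rewrite !(IIc_sym u v H).
  unfold IIc. rewrite !mink_nn by auto. rewrite !tcoef_eq.
  unfold sum2.
  rewrite I00, I01, I10, I11, Hdet.
  jnorm u v H. jnorm u v H.
  msym u v.
  field. auto.
Qed.

End Geo3.

Lemma Dpt_unique i f u v l1 l2 : Dpt i f u v l1 -> Dpt i f u v l2 -> l1 = l2.
Proof. intros H1 H2. rewrite <- (pd_Dpt _ _ _ _ _ H1). apply pd_Dpt; auto. Qed.

Lemma Dpt_loc_eq (U : R -> R -> Prop) i f g u v l1 l2 : open2 U -> U u v ->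
  (forall a b, U a b -> f a b = g a b) -> Dpt i f u v l1 -> Dpt i g u v l2 -> l1 = l2.
Proof. intros HU H E H1 H2. eapply Dpt_unique; [|exact H2]. eapply Dpt_loc; eauto. Qed.

Section Cons.
Variable n : nat.
Variable U : R -> R -> Prop.
Variable X : R -> R -> vec.
Hypothesis HU : open2 U.
Hypothesis HX : forall c, smooth_on U (fun a b => X a b c).
Variable Z : vec.
Variable w : R -> R -> nat -> R.
Hypothesis Hdet : forall a b, U a b -> gdet n X a b < 0.
Hypothesis Hnull : forall a b, U a b ->
  vnonzero n (tanp n X Z a b) /\ mink n (tanp n X Z a b) (tanp n X Z a b) = 0.
Hypothesis HW : forall a b, U a b ->
  vnonzero n (tvec X (w a b) a b) /\ mink n (tvec X (w a b) a b) (tvec X (w a b) a b) = 0 /\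
  mink n (tanp n X Z a b) (tvec X (w a b) a b) = -1.

Lemma Hd a b : U a b -> gdet n X a b <> 0.
Proof. intro H. specialize (Hdet a b H). lra. Qed.

Ltac datoms a b H :=
  first [ apply (D_gmet n U X HX _ _ _ a b H)
        | apply (D_X1 U X HX _ _ a b H)
        | apply (D_X2 U X HX _ _ _ a b H) ].

Lemma has_T k i a b : U a b -> has_pd k (fun a b => tcoef n X Z a b i) a b.
Proof.
  intro H. apply has_pd_Dpt.
  destruct i as [|i]; eexists; unfold tcoef, sum2; cbn [ginv]; unfold gdet;
  repeat (dpt_step ltac:(datoms a b H)); apply (Hd a b H).
Qed.

Lemma D_T k i a b : U a b -> Dpt k (fun a b => tcoef n X Z a b i) a b (pd k (fun a b => tcoef n X Z a b i) a b).
Proof. intro H. apply Dpt_pd, has_T; auto. Qed.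

Definition frame_at a b (H : U a b) :=
  frame_geo n X (tcoef n X Z a b) (w a b) a b (proj2 (Hnull a b H))
     (proj1 (proj2 (HW a b H))) (proj2 (proj2 (HW a b H))) _ eq_refl.

Definition Wf (i : nat) (a b : R) : R :=
  let t0 := tcoef n X Z a b 0 in let t1 := tcoef n X Z a b 1 in
  let ti := tcoef n X Z a b i in
  let s := t0 * t0 + t1 * t1 in
  (- (ginv n X i 0 a b * t0 + ginv n X i 1 a b * t1)
   + ti * ((t0 * (ginv n X 0 0 a b * t0 + ginv n X 0 1 a b * t1)
          + t1 * (ginv n X 1 0 a b * t0 + ginv n X 1 1 a b * t1)) / (2 * s))) / s.

Lemma tnz a b : U a b -> tcoef n X Z a b 0 * tcoef n X Z a b 0 + tcoef n X Z a b 1 * tcoef n X Z a b 1 <> 0.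
Proof.
  intro H. destruct (frame_at a b H) as [HD _].
  intro E. apply HD.
  assert (E0 : tcoef n X Z a b 0 = 0) by nra.
  assert (E1 : tcoef n X Z a b 1 = 0) by nra.
  rewrite E0, E1. ring.
Qed.

Lemma w_Wf i a b : U a b -> (i = 0 \/ i = 1)%nat -> w a b i = Wf i a b.
Proof.
  intros H Hi. pose proof (tnz a b H) as Hs.
  destruct (frame_at a b H) as [HD [_ [_ [_ [_ [_ [_ [I00 [I01 [I10 I11]]]]]]]]]].
  unfold Wf. cbv zeta.
  destruct Hi as [-> | ->]; rewrite ?I00, ?I01, ?I10, ?I11; field; auto.
Qed.


Ltac datoms2 a b H :=
  first [ apply (D_gmet n U X HX _ _ _ a b H)
        | apply (D_T _ _ a b H)
        | apply (D_X1 U X HX _ _ a b H)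
        | apply (D_X2 U X HX _ _ _ a b H) ].

Lemma D_W k i a b : U a b -> (i = 0 \/ i = 1)%nat ->
  Dpt k (fun a b => w a b i) a b (pd k (fun a b => w a b i) a b).
Proof.
  intros H Hi. apply Dpt_pd. apply has_pd_Dpt.
  destruct Hi as [-> | ->]; eexists;
  (eapply (Dpt_loc U _ (Wf _)); [exact HU| exact H| intros a' b' H'; symmetry; apply w_Wf; auto| ]);
  unfold Wf; cbv zeta; cbn [ginv]; unfold gdet;
  repeat (dpt_step ltac:(datoms2 a b H));
  first [apply (Hd a b H) | apply (tnz a b H) | (apply Rmult_integral_contrapositive_currified; [discrR | apply (tnz a b H)])].
Qed.

Definition dgk k i j a b := mink n (pdv k (Xd X i) a b) (Xd X j a b) + mink n (Xd X i a b) (pdv k (Xd X j) a b).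

Lemma dgk_sym k a b : dgk k 1 0 a b = dgk k 0 1 a b.
Proof. unfold dgk. rewrite (mink_sym n (pdv k (Xd X 1) a b)), (mink_sym n (Xd X 1 a b)). ring. Qed.

Lemma E_tt k a b : U a b ->
  G2 (dgk k 0 0 a b) (dgk k 0 1 a b) (dgk k 1 1 a b)
     (tcoef n X Z a b 0) (tcoef n X Z a b 1) (tcoef n X Z a b 0) (tcoef n X Z a b 1)
  + 2 * G2 (gmet n X 0 0 a b) (gmet n X 0 1 a b) (gmet n X 1 1 a b)
     (pd k (fun a b => tcoef n X Z a b 0) a b) (pd k (fun a b => tcoef n X Z a b 1) a b)
     (tcoef n X Z a b 0) (tcoef n X Z a b 1) = 0.
Proof.
  intro H.
  eassert (Hl : Dpt k (fun a b => G2 (gmet n X 0 0 a b) (gmet n X 0 1 a b) (gmet n X 1 1 a b)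
     (tcoef n X Z a b 0) (tcoef n X Z a b 1) (tcoef n X Z a b 0) (tcoef n X Z a b 1)) a b _).
  { unfold G2. repeat (dpt_step ltac:(datoms2 a b H)). }
  pose proof (Dpt_loc_eq U k _ (fun _ _ => 0) a b _ 0 HU H
     (fun a' b' H' => eq_trans (eq_sym (mink_tvec n X _ _ a' b')) (proj2 (Hnull a' b' H'))) Hl (Dpt_const k 0 a b)) as E.
  unfold G2, dgk in *. cbv beta in E. lra.
Qed.


Ltac datoms3 a b H :=
  first [ apply (D_gmet n U X HX _ _ _ a b H)
        | apply (D_T _ _ a b H)
        | apply (D_W _ 0 a b H (or_introl eq_refl))
        | apply (D_W _ 1 a b H (or_intror eq_refl))
        | apply (D_X1 U X HX _ _ a b H)
        | apply (D_X2 U X HX _ _ _ a b H) ].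

Definition ttc a b := tcoef n X Z a b.
Definition dT k i a b := pd k (fun a b => tcoef n X Z a b i) a b.
Definition dW k i a b := pd k (fun a b => w a b i) a b.
Definition G2g a b := G2 (gmet n X 0 0 a b) (gmet n X 0 1 a b) (gmet n X 1 1 a b).
Definition G2d k a b := G2 (dgk k 0 0 a b) (dgk k 0 1 a b) (dgk k 1 1 a b).

Lemma E_tw k a b : U a b ->
  G2d k a b (ttc a b 0) (ttc a b 1) (w a b 0) (w a b 1)
  + G2g a b (dT k 0 a b) (dT k 1 a b) (w a b 0) (w a b 1)
  + G2g a b (ttc a b 0) (ttc a b 1) (dW k 0 a b) (dW k 1 a b) = 0.
Proof.
  intro H.
  eassert (Hl : Dpt k (fun a b => G2 (gmet n X 0 0 a b) (gmet n X 0 1 a b) (gmet n X 1 1 a b)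
     (tcoef n X Z a b 0) (tcoef n X Z a b 1) (w a b 0) (w a b 1)) a b _).
  { unfold G2. repeat (dpt_step ltac:(datoms3 a b H)). }
  pose proof (Dpt_loc_eq U k _ (fun _ _ => -1) a b _ 0 HU H
     (fun a' b' H' => eq_trans (eq_sym (mink_tvec n X _ _ a' b')) (proj2 (proj2 (HW a' b' H')))) Hl (Dpt_const k (-1) a b)) as E.
  unfold G2d, G2g, ttc, dT, dW, G2, dgk in *. cbv beta in E. lra.
Qed.

Lemma E_ww k a b : U a b ->
  G2d k a b (w a b 0) (w a b 1) (w a b 0) (w a b 1)
  + 2 * G2g a b (w a b 0) (w a b 1) (dW k 0 a b) (dW k 1 a b) = 0.
Proof.
  intro H.
  eassert (Hl : Dpt k (fun a b => G2 (gmet n X 0 0 a b) (gmet n X 0 1 a b) (gmet n X 1 1 a b)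
     (w a b 0) (w a b 1) (w a b 0) (w a b 1)) a b _).
  { unfold G2. repeat (dpt_step ltac:(datoms3 a b H)). }
  pose proof (Dpt_loc_eq U k _ (fun _ _ => 0) a b _ 0 HU H
     (fun a' b' H' => eq_trans (eq_sym (mink_tvec n X _ _ a' b')) (proj1 (proj2 (HW a' b' H')))) Hl (Dpt_const k 0 a b)) as E.
  unfold G2d, G2g, ttc, dT, dW, G2, dgk in *. cbv beta in E. lra.
Qed.

Lemma tz_pt j a b : U a b -> (j = 0 \/ j = 1)%nat ->
  gmet n X j 0 a b * tcoef n X Z a b 0 + gmet n X j 1 a b * tcoef n X Z a b 1 = mink n Z (Xd X j a b).
Proof.
  intros H Hj. pose proof (Hd a b H) as Hd0. unfold gdet, gmet in Hd0.
  unfold tcoef, sum2. cbn [ginv]; unfold gdet, gmet.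
  rewrite !(mink_sym n (Xd X 1 a b) (Xd X 0 a b)) in *.
  destruct Hj as [-> | ->]; rewrite ?(mink_sym n (Xd X 1 a b) (Xd X 0 a b)); field; auto.
Qed.

Lemma E_z k j a b : U a b -> (j = 0 \/ j = 1)%nat ->
  dgk k j 0 a b * ttc a b 0 + gmet n X j 0 a b * dT k 0 a b
  + (dgk k j 1 a b * ttc a b 1 + gmet n X j 1 a b * dT k 1 a b)
  = mink n Z (pdv k (Xd X j) a b).
Proof.
  intros H Hj.
  eassert (Hl : Dpt k (fun a b => gmet n X j 0 a b * tcoef n X Z a b 0 + gmet n X j 1 a b * tcoef n X Z a b 1) a b _).
  { repeat (dpt_step ltac:(datoms3 a b H)). }
  eassert (Hr : Dpt k (fun a b => mink n Z (Xd X j a b)) a b _).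
  { repeat (dpt_step ltac:(datoms3 a b H)). }
  pose proof (Dpt_loc_eq U k _ _ a b _ _ HU H (fun a' b' H' => tz_pt j a' b' H' Hj) Hl Hr) as E.
  rewrite mink_zero_l in E. unfold ttc, dT, dgk. cbv beta in E. lra.
Qed.

End Cons.

Section NDer.
Variable n : nat.
Variable U : R -> R -> Prop.
Variable X : R -> R -> vec.
Hypothesis HU : open2 U.
Hypothesis HX : forall c, smooth_on U (fun a b => X a b c).

Ltac datoms a b H :=
  first [ apply (D_gmet n U X HX _ _ _ a b H)
        | apply (D_X1 U X HX _ _ a b H)
        | apply (D_X2 U X HX _ _ _ a b H) ].

Lemma D_ginv k i j a b : U a b -> gdet n X a b <> 0 ->
  Dpt k (ginv n X i j) a b (pd k (ginv n X i j) a b).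
Proof.
  intros H Hd. apply Dpt_pd. apply has_pd_Dpt.
  destruct i as [|i]; destruct j as [|j]; eexists; cbn [ginv]; unfold gdet in *;
  repeat (dpt_step ltac:(datoms a b H)); exact Hd.
Qed.

Lemma DptV_norp F L k a b : U a b -> gdet n X a b <> 0 -> DptV k F a b L ->
  exists d0 d1, DptV k (fun a b => norp n X (F a b) a b) a b
   (vsub L (vadd (vadd (vscale d0 (Xd X 0 a b)) (vscale (tcoef n X (F a b) a b 0) (pdv k (Xd X 0) a b)))
                 (vadd (vscale d1 (Xd X 1 a b)) (vscale (tcoef n X (F a b) a b 1) (pdv k (Xd X 1) a b))))).
Proof.
  intros H Hd HF. do 2 eexists.
  eapply (DptV_ext k (fun a b => vsub (F a b) (vadd (vscale (tcoef n X (F a b) a b 0) (Xd X 0 a b))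
      (vscale (tcoef n X (F a b) a b 1) (Xd X 1 a b))))); [intros; reflexivity| reflexivity|].
  apply DptV_vsub; [exact HF|].
  apply DptV_vadd; (apply DptV_vscale; [| apply (D_X1 U X HX _ _ a b H)]);
  unfold tcoef, sum2;
  repeat (first [apply (D_ginv _ _ _ a b H Hd) | exact HF | dpt_step ltac:(datoms a b H)]).
Qed.

Lemma norp_nder L d0 d1 c0 c1 k a b : gdet n X a b <> 0 ->
  norp n X (vsub L (vadd (vadd (vscale d0 (Xd X 0 a b)) (vscale c0 (pdv k (Xd X 0) a b)))
                 (vadd (vscale d1 (Xd X 1 a b)) (vscale c1 (pdv k (Xd X 1) a b))))) a b
  = vsub (norp n X L a b) (vadd (vscale c0 (IIc n X k 0 a b)) (vscale c1 (IIc n X k 1 a b))).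
Proof.
  intro Hd. rewrite norp_vsub, !norp_vadd, !norp_vscale, norp_X0, norp_X1 by auto.
  unfold IIc. apply functional_extensionality; intro c. unfold vsub, vadd, vscale. ring.
Qed.

Lemma N_IIc k i j a b : U a b -> gdet n X a b <> 0 ->
  norp n X (pdv k (IIc n X i j) a b) a b =
  vsub (norp n X (pdv k (pdv i (Xd X j)) a b) a b)
       (vadd (vscale (tcoef n X (pdv i (Xd X j) a b) a b 0) (IIc n X k 0 a b))
             (vscale (tcoef n X (pdv i (Xd X j) a b) a b 1) (IIc n X k 1 a b))).
Proof.
  intros H Hd.
  destruct (DptV_norp (pdv i (Xd X j)) _ k a b H Hd (D_X2 U X HX k i j a b H)) as [d0 [d1 HD]].
  unfold IIc at 1. rewrite (pdv_DptV _ _ _ _ _ HD). apply norp_nder; auto.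
Qed.

Lemma D_IIc k i j a b : U a b -> gdet n X a b <> 0 ->
  DptV k (IIc n X i j) a b (pdv k (IIc n X i j) a b).
Proof.
  intros H Hd.
  destruct (DptV_norp (pdv i (Xd X j)) _ k a b H Hd (D_X2 U X HX k i j a b H)) as [d0 [d1 HD]].
  apply DptV_pdv. intro c. eapply Dpt_has. apply HD.
Qed.

Lemma N_N (Z : vec) k a b : U a b -> gdet n X a b <> 0 ->
  norp n X (pdv k (fun a b => norp n X Z a b) a b) a b =
  vsub (fun _ => 0) (vadd (vscale (tcoef n X Z a b 0) (IIc n X k 0 a b))
             (vscale (tcoef n X Z a b 1) (IIc n X k 1 a b))).
Proof.
  intros H Hd.
  destruct (DptV_norp (fun _ _ => Z) _ k a b H Hd (DptV_const k Z a b)) as [d0 [d1 HD]].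
  rewrite (pdv_DptV _ _ _ _ _ HD). rewrite norp_nder, norp_zero; auto.
Qed.

Lemma D_N (Z : vec) k a b : U a b -> gdet n X a b <> 0 ->
  DptV k (fun a b => norp n X Z a b) a b (pdv k (fun a b => norp n X Z a b) a b).
Proof.
  intros H Hd.
  destruct (DptV_norp (fun _ _ => Z) _ k a b H Hd (DptV_const k Z a b)) as [d0 [d1 HD]].
  apply DptV_pdv. intro c. eapply Dpt_has. apply HD.
Qed.

Lemma D_Hvec k a b : U a b -> gdet n X a b <> 0 ->
  DptV k (Hvec n X) a b (pdv k (Hvec n X) a b).
Proof.
  intros H Hd. apply DptV_pdv. intro c. apply has_pd_Dpt.
  cut (exists L, DptV k (Hvec n X) a b L). { intros [L HL]. eexists; apply HL. }
  eexists. unfold Hvec.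
  repeat (first [apply (D_ginv _ _ _ a b H Hd) | apply (D_IIc _ _ _ a b H Hd) | dpt_step ltac:(datoms a b H)]).
Qed.

End NDer.

Lemma norp_IIc n X i j a b : gdet n X a b <> 0 -> norp n X (IIc n X i j a b) a b = IIc n X i j a b.
Proof. intro Hd. unfold IIc. apply norp_norp; auto. Qed.

Section Id2.
Variable n : nat.
Variable U : R -> R -> Prop.
Variable X : R -> R -> vec.
Hypothesis HU : open2 U.
Hypothesis HX : forall c, smooth_on U (fun a b => X a b c).
Variable Z : vec.
Variable w : R -> R -> nat -> R.
Hypothesis Hdet : forall a b, U a b -> gdet n X a b < 0.
Hypothesis Hnull : forall a b, U a b ->
  vnonzero n (tanp n X Z a b) /\ mink n (tanp n X Z a b) (tanp n X Z a b) = 0.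
Hypothesis HW : forall a b, U a b ->
  vnonzero n (tvec X (w a b) a b) /\ mink n (tvec X (w a b) a b) (tvec X (w a b) a b) = 0 /\
  mink n (tanp n X Z a b) (tvec X (w a b) a b) = -1.

Let hd := Hd n U X Hdet.

Lemma frame3 a b : U a b ->
  G2 (gmet n X 0 0 a b) (gmet n X 0 1 a b) (gmet n X 1 1 a b)
     (tcoef n X Z a b 0) (tcoef n X Z a b 1) (tcoef n X Z a b 0) (tcoef n X Z a b 1) = 0 /\
  G2 (gmet n X 0 0 a b) (gmet n X 0 1 a b) (gmet n X 1 1 a b)
     (w a b 0) (w a b 1) (w a b 0) (w a b 1) = 0 /\
  G2 (gmet n X 0 0 a b) (gmet n X 0 1 a b) (gmet n X 1 1 a b)
     (tcoef n X Z a b 0) (tcoef n X Z a b 1) (w a b 0) (w a b 1) = -1.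
Proof.
  intro H. destruct (Hnull a b H) as [_ H1]. destruct (HW a b H) as [_ [H2 H3]].
  unfold tanp in *. rewrite mink_tvec in H1, H2, H3. auto.
Qed.

Lemma Rels k a b : U a b ->
  tcoef n X Z a b 0 * mink n Z (pdv k (Xd X 0) a b) + tcoef n X Z a b 1 * mink n Z (pdv k (Xd X 1) a b)
   = / 2 * G2 (dgk n X k 0 0 a b) (dgk n X k 0 1 a b) (dgk n X k 1 1 a b)
        (tcoef n X Z a b 0) (tcoef n X Z a b 1) (tcoef n X Z a b 0) (tcoef n X Z a b 1) /\
  pd k (fun a b => w a b 0) a b = / 2 * G2 (dgk n X k 0 0 a b) (dgk n X k 0 1 a b) (dgk n X k 1 1 a b)
        (w a b 0) (w a b 1) (w a b 0) (w a b 1) * tcoef n X Z a b 0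
      + (w a b 0 * mink n Z (pdv k (Xd X 0) a b) + w a b 1 * mink n Z (pdv k (Xd X 1) a b)) * w a b 0 /\
  pd k (fun a b => w a b 1) a b = / 2 * G2 (dgk n X k 0 0 a b) (dgk n X k 0 1 a b) (dgk n X k 1 1 a b)
        (w a b 0) (w a b 1) (w a b 0) (w a b 1) * tcoef n X Z a b 1
      + (w a b 0 * mink n Z (pdv k (Xd X 0) a b) + w a b 1 * mink n Z (pdv k (Xd X 1) a b)) * w a b 1.
Proof.
  intro H. destruct (frame3 a b H) as [H1 [H2 H3]].
  pose proof (E_tt n U X HU HX Z Hdet Hnull k a b H) as Ett.
  pose proof (E_tw n U X HU HX Z w Hdet Hnull HW k a b H) as Etw.
  pose proof (E_ww n U X HU HX Z w Hdet Hnull HW k a b H) as Eww.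
  pose proof (E_z n U X HU HX Z Hdet k 0 a b H (or_introl eq_refl)) as Ez0.
  pose proof (E_z n U X HU HX Z Hdet k 1 a b H (or_intror eq_refl)) as Ez1.
  unfold G2g, G2d, ttc, dT, dW in *.
  rewrite dgk_sym in Ez1.
  replace (gmet n X 1 0 a b) with (gmet n X 0 1 a b) in Ez1 by (unfold gmet; apply mink_sym).
  exact (rel_alg _ _ _ _ _ _ _ _ _ _ _ _ _ _ _ _ H1 H2 H3 Ett Etw Eww Ez0 Ez1).
Qed.

Definition nu k j a b := mink n (norp n X Z a b) (pdv k (Xd X j) a b).

Lemma z_split k j a b : mink n Z (pdv k (Xd X j) a b) =
  tcoef n X Z a b 0 * mink n (Xd X 0 a b) (pdv k (Xd X j) a b)
  + tcoef n X Z a b 1 * mink n (Xd X 1 a b) (pdv k (Xd X j) a b) + nu k j a b.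
Proof.
  unfold nu. rewrite norp_eq, tanp_eq, mink_vsub_l, mink_vadd_l, !mink_vscale_l. ring.
Qed.

Lemma nu_rel k a b : U a b -> tcoef n X Z a b 0 * nu k 0 a b + tcoef n X Z a b 1 * nu k 1 a b = 0.
Proof.
  intro H. destruct (Rels k a b H) as [R _].
  rewrite !z_split in R. unfold G2, dgk in R.
  rewrite ?(mink_sym n (pdv k (Xd X 0) a b) (Xd X 0 a b)), ?(mink_sym n (pdv k (Xd X 1) a b) (Xd X 0 a b)),
    ?(mink_sym n (pdv k (Xd X 0) a b) (Xd X 1 a b)), ?(mink_sym n (pdv k (Xd X 1) a b) (Xd X 1 a b)) in R.
  lra.
Qed.

Lemma nu_sym a b : U a b -> nu 1 0 a b = nu 0 1 a b.
Proof. intro H. unfold nu. rewrite (sym2 U X HU HX a b H). reflexivity. Qed.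

Lemma nu_param a b : U a b -> exists c,
  nu 0 0 a b = c * (tcoef n X Z a b 1 * tcoef n X Z a b 1) /\
  nu 0 1 a b = - c * (tcoef n X Z a b 0 * tcoef n X Z a b 1) /\
  nu 1 0 a b = - c * (tcoef n X Z a b 0 * tcoef n X Z a b 1) /\
  nu 1 1 a b = c * (tcoef n X Z a b 0 * tcoef n X Z a b 0).
Proof.
  intro H. pose proof (nu_rel 0 a b H) as R0. pose proof (nu_rel 1 a b H) as R1.
  rewrite (nu_sym a b H) in *.
  destruct (nu_alg _ _ _ _ _ (tnz n U X Z w Hnull HW a b H) R0 R1) as [c [E0 [E1 E2]]].
  exists c. repeat split; auto.
Qed.


Lemma Hvec_norp a b : U a b -> norp n X (Hvec n X a b) a b = Hvec n X a b.
Proof.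
  intro H. unfold Hvec. repeat (rewrite vsum2_vadd; cbv beta).
  rewrite norp_vscale, !norp_vadd, !norp_vscale. unfold IIc. rewrite !norp_norp by (apply hd; auto).
  reflexivity.
Qed.

Lemma IIc_sym' a b : U a b -> IIc n X 1 0 a b = IIc n X 0 1 a b.
Proof. intro H. unfold IIc. rewrite (sym2 U X HU HX a b H). reflexivity. Qed.

Lemma H_frame a b : U a b ->
  Hvec n X a b = vopp (II n X (tcoef n X Z a b) (w a b) a b).
Proof.
  intro H.
  destruct (frame_at n U X Z w Hnull HW a b H) as [_ [_ [_ [_ [_ [_ [_ [I00 [I01 [I10 I11]]]]]]]]]].
  unfold Hvec, II. repeat (rewrite vsum2_vadd; cbv beta). rewrite I00, I01, I10, I11, !(IIc_sym' a b H).
  apply vext; intro c. unfold vadd, vscale, vopp. field.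
Qed.

Lemma mink_nn2 Y Y' a b : U a b -> mink n (norp n X Y a b) (norp n X Y' a b) = mink n Y (norp n X Y' a b).
Proof.
  intro H. rewrite (mink_sym n (norp n X Y a b)), <- mink_norp_l by (apply hd; auto). apply mink_sym.
Qed.

Lemma IIc_N i j a b : U a b -> mink n (IIc n X i j a b) (norp n X Z a b) = nu i j a b.
Proof.
  intro H. unfold IIc, nu. rewrite mink_nn2 by auto. apply mink_sym.
Qed.

Ltac mexp := repeat first [rewrite mink_vadd_l | rewrite mink_vadd_r | rewrite mink_vscale_l
   | rewrite mink_vscale_r | rewrite mink_vsub_l | rewrite mink_vsub_r | rewrite mink_vopp_l
   | rewrite mink_vopp_r | rewrite mink_zero_l | rewrite mink_zero_r].

Lemma HN0 a b : U a b -> mink n (Hvec n X a b) (norp n X Z a b) = 0.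
Proof.
  intro H. rewrite (H_frame a b H). unfold II. repeat (rewrite vsum2_vadd; cbv beta).
  mexp. rewrite !IIc_N by auto.
  destruct (nu_param a b H) as [c [E0 [E1 [E2 E3]]]]. rewrite E0, E1, E2, E3. ring.
Qed.

Lemma ident2 u v : U u v ->
  mink n (Hvec n X u v) (Hvec n X u v) = - mink n (nablaperp n X (w u v) (Hvec n X) u v) (norp n X Z u v).
Proof.
  intro H. pose proof (hd u v H) as Hd0.
  assert (DK : forall k, mink n (pdv k (Hvec n X) u v) (norp n X Z u v)
      + mink n (Hvec n X u v) (pdv k (fun a b => norp n X Z a b) u v) = 0).
  { intro k. eapply (Dpt_loc_eq U k (fun a b => mink n (Hvec n X a b) (norp n X Z a b)) (fun _ _ => 0) u v);
      [exact HU | exact H | exact HN0 | | apply Dpt_const].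
    apply Dpt_mink; [apply (D_Hvec n U X HX k u v H Hd0) | apply (D_N n U X HX Z k u v H Hd0)]. }
  assert (HY : forall Y, mink n (Hvec n X u v) Y = mink n (Hvec n X u v) (norp n X Y u v)).
  { intro Y. rewrite <- (Hvec_norp u v H) at 1 2. rewrite <- mink_norp_l by auto. reflexivity. }
  unfold nablaperp. rewrite (mink_nn2 _ _ u v H). unfold Dv. rewrite vsum2_vadd. cbv beta. mexp.
  assert (E0 := DK 0%nat). assert (E1 := DK 1%nat).
  rewrite HY in E0, E1. rewrite !(N_N n U X HX Z) in E0, E1 by auto.
  assert (F0 : mink n (pdv 0 (Hvec n X) u v) (norp n X Z u v) =
     - mink n (Hvec n X u v) (vsub (fun _ => 0) (vadd (vscale (tcoef n X Z u v 0) (IIc n X 0 0 u v))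
                 (vscale (tcoef n X Z u v 1) (IIc n X 0 1 u v))))) by lra.
  assert (F1 : mink n (pdv 1 (Hvec n X) u v) (norp n X Z u v) =
     - mink n (Hvec n X u v) (vsub (fun _ => 0) (vadd (vscale (tcoef n X Z u v 0) (IIc n X 1 0 u v))
                 (vscale (tcoef n X Z u v 1) (IIc n X 1 1 u v))))) by lra.
  rewrite F0, F1. clear E0 E1 F0 F1 DK HY.
  rewrite (H_frame u v H). unfold II. repeat (rewrite vsum2_vadd; cbv beta).
  rewrite !(IIc_sym' u v H). mexp.
  rewrite !(mink_sym n (IIc n X 0 1 u v) (IIc n X 0 0 u v)), !(mink_sym n (IIc n X 1 1 u v) (IIc n X 0 0 u v)),
     !(mink_sym n (IIc n X 1 1 u v) (IIc n X 0 1 u v)).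
  ring.
Qed.

End Id2.

Section Id1.
Variable n : nat.
Variable U : R -> R -> Prop.
Variable X : R -> R -> vec.
Hypothesis HU : open2 U.
Hypothesis HX : forall c, smooth_on U (fun a b => X a b c).
Variable Z : vec.
Variable w : R -> R -> nat -> R.
Hypothesis Hdet : forall a b, U a b -> gdet n X a b < 0.
Hypothesis Hnull : forall a b, U a b ->
  vnonzero n (tanp n X Z a b) /\ mink n (tanp n X Z a b) (tanp n X Z a b) = 0.
Hypothesis HW : forall a b, U a b ->
  vnonzero n (tvec X (w a b) a b) /\ mink n (tvec X (w a b) a b) (tvec X (w a b) a b) = 0 /\
  mink n (tanp n X Z a b) (tvec X (w a b) a b) = -1.

Let hd := Hd n U X Hdet.

Ltac jnorm u v H :=
  try rewrite (sym3b U X HU HX 0 u v H);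
  try rewrite (sym3a U X HU HX 0 u v H);
  try rewrite (sym3a U X HU HX 1 u v H);
  try rewrite (sym3b U X HU HX 1 u v H);
  try rewrite (sym2 U X HU HX u v H).

Ltac msym u v :=
  repeat rewrite (mink_sym n (Xd X 1 u v) (Xd X 0 u v));
  repeat rewrite (mink_sym n (pdv 0 (Xd X 0) u v) (Xd X 0 u v));
  repeat rewrite (mink_sym n (pdv 0 (Xd X 1) u v) (Xd X 0 u v));
  repeat rewrite (mink_sym n (pdv 1 (Xd X 1) u v) (Xd X 0 u v));
  repeat rewrite (mink_sym n (pdv 0 (pdv 0 (Xd X 0)) u v) (Xd X 0 u v));
  repeat rewrite (mink_sym n (pdv 0 (pdv 0 (Xd X 1)) u v) (Xd X 0 u v));
  repeat rewrite (mink_sym n (pdv 0 (pdv 1 (Xd X 1)) u v) (Xd X 0 u v));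
  repeat rewrite (mink_sym n (pdv 1 (pdv 1 (Xd X 1)) u v) (Xd X 0 u v));
  repeat rewrite (mink_sym n (pdv 0 (Xd X 0) u v) (Xd X 1 u v));
  repeat rewrite (mink_sym n (pdv 0 (Xd X 1) u v) (Xd X 1 u v));
  repeat rewrite (mink_sym n (pdv 1 (Xd X 1) u v) (Xd X 1 u v));
  repeat rewrite (mink_sym n (pdv 0 (pdv 0 (Xd X 0)) u v) (Xd X 1 u v));
  repeat rewrite (mink_sym n (pdv 0 (pdv 0 (Xd X 1)) u v) (Xd X 1 u v));
  repeat rewrite (mink_sym n (pdv 0 (pdv 1 (Xd X 1)) u v) (Xd X 1 u v));
  repeat rewrite (mink_sym n (pdv 1 (pdv 1 (Xd X 1)) u v) (Xd X 1 u v));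
  repeat rewrite (mink_sym n (pdv 0 (Xd X 1) u v) (pdv 0 (Xd X 0) u v));
  repeat rewrite (mink_sym n (pdv 1 (Xd X 1) u v) (pdv 0 (Xd X 0) u v));
  repeat rewrite (mink_sym n (pdv 0 (pdv 0 (Xd X 0)) u v) (pdv 0 (Xd X 0) u v));
  repeat rewrite (mink_sym n (pdv 0 (pdv 0 (Xd X 1)) u v) (pdv 0 (Xd X 0) u v));
  repeat rewrite (mink_sym n (pdv 0 (pdv 1 (Xd X 1)) u v) (pdv 0 (Xd X 0) u v));
  repeat rewrite (mink_sym n (pdv 1 (pdv 1 (Xd X 1)) u v) (pdv 0 (Xd X 0) u v));
  repeat rewrite (mink_sym n (pdv 1 (Xd X 1) u v) (pdv 0 (Xd X 1) u v));
  repeat rewrite (mink_sym n (pdv 0 (pdv 0 (Xd X 0)) u v) (pdv 0 (Xd X 1) u v));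
  repeat rewrite (mink_sym n (pdv 0 (pdv 0 (Xd X 1)) u v) (pdv 0 (Xd X 1) u v));
  repeat rewrite (mink_sym n (pdv 0 (pdv 1 (Xd X 1)) u v) (pdv 0 (Xd X 1) u v));
  repeat rewrite (mink_sym n (pdv 1 (pdv 1 (Xd X 1)) u v) (pdv 0 (Xd X 1) u v));
  repeat rewrite (mink_sym n (pdv 0 (pdv 0 (Xd X 0)) u v) (pdv 1 (Xd X 1) u v));
  repeat rewrite (mink_sym n (pdv 0 (pdv 0 (Xd X 1)) u v) (pdv 1 (Xd X 1) u v));
  repeat rewrite (mink_sym n (pdv 0 (pdv 1 (Xd X 1)) u v) (pdv 1 (Xd X 1) u v));
  repeat rewrite (mink_sym n (pdv 1 (pdv 1 (Xd X 1)) u v) (pdv 1 (Xd X 1) u v));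
  repeat rewrite (mink_sym n (pdv 0 (pdv 0 (Xd X 1)) u v) (pdv 0 (pdv 0 (Xd X 0)) u v));
  repeat rewrite (mink_sym n (pdv 0 (pdv 1 (Xd X 1)) u v) (pdv 0 (pdv 0 (Xd X 0)) u v));
  repeat rewrite (mink_sym n (pdv 1 (pdv 1 (Xd X 1)) u v) (pdv 0 (pdv 0 (Xd X 0)) u v));
  repeat rewrite (mink_sym n (pdv 0 (pdv 1 (Xd X 1)) u v) (pdv 0 (pdv 0 (Xd X 1)) u v));
  repeat rewrite (mink_sym n (pdv 1 (pdv 1 (Xd X 1)) u v) (pdv 0 (pdv 0 (Xd X 1)) u v));
  repeat rewrite (mink_sym n (pdv 1 (pdv 1 (Xd X 1)) u v) (pdv 0 (pdv 1 (Xd X 1)) u v));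
  idtac.

Ltac datoms a b H Hd0 :=
  first [ apply (D_gmet n U X HX _ _ _ a b H)
        | apply (D_ginv n U X HX _ _ _ a b H Hd0)
        | apply (D_IIc n U X HX _ _ _ a b H Hd0)
        | apply (D_W n U X HU HX Z w Hdet Hnull HW _ 0 a b H (or_introl eq_refl))
        | apply (D_W n U X HU HX Z w Hdet Hnull HW _ 1 a b H (or_intror eq_refl))
        | apply (D_X1 U X HX _ _ a b H)
        | apply (D_X2 U X HX _ _ _ a b H) ].

Ltac npush H Hd0 := repeat first [ rewrite norp_vadd | rewrite norp_vsub | rewrite norp_vscale
   | rewrite norp_vopp | rewrite norp_zero | rewrite (N_IIc n U X HX _ _ _ _ _ H Hd0)
   | rewrite (norp_IIc n X _ _ _ _ Hd0) ].

Lemma ident1 u v : U u v ->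
  nablaperp n X (w u v) (Hvec n X) u v =
  vopp (nablaperp n X (ZTc n X Z u v) (fun a b => II n X (w a b) (w a b) a b) u v).
Proof.
  intro H. pose proof (hd u v H) as Hd0.
  unfold nablaperp, Dv, ZTc. rewrite !vsum2_vadd. cbv beta.
  erewrite (pdv_DptV 0 (Hvec n X) u v) by (unfold Hvec; repeat (dpt_step ltac:(datoms u v H Hd0))).
  erewrite (pdv_DptV 1 (Hvec n X) u v) by (unfold Hvec; repeat (dpt_step ltac:(datoms u v H Hd0))).
  erewrite (pdv_DptV 0 (fun a b => II n X (w a b) (w a b) a b) u v)
    by (unfold II; repeat (dpt_step ltac:(datoms u v H Hd0))).
  erewrite (pdv_DptV 1 (fun a b => II n X (w a b) (w a b) a b) u v)
    by (unfold II; repeat (dpt_step ltac:(datoms u v H Hd0))).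
  cbv beta.
  npush H Hd0.
  jnorm u v H. jnorm u v H. rewrite !(IIc_sym' n U X HU HX u v H).
  apply vext; intro c. unfold vadd, vsub, vscale, vopp.
  erewrite (pd_Dpt 0 (ginv n X 0 0) u v) by (unfold ginv; cbv beta iota; unfold gdet; repeat (dpt_step ltac:(datoms u v H Hd0)); exact Hd0).
  erewrite (pd_Dpt 0 (ginv n X 0 1) u v) by (unfold ginv; cbv beta iota; unfold gdet; repeat (dpt_step ltac:(datoms u v H Hd0)); exact Hd0).
  erewrite (pd_Dpt 0 (ginv n X 1 0) u v) by (unfold ginv; cbv beta iota; unfold gdet; repeat (dpt_step ltac:(datoms u v H Hd0)); exact Hd0).
  erewrite (pd_Dpt 0 (ginv n X 1 1) u v) by (unfold ginv; cbv beta iota; unfold gdet; repeat (dpt_step ltac:(datoms u v H Hd0)); exact Hd0).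
  erewrite (pd_Dpt 1 (ginv n X 0 0) u v) by (unfold ginv; cbv beta iota; unfold gdet; repeat (dpt_step ltac:(datoms u v H Hd0)); exact Hd0).
  erewrite (pd_Dpt 1 (ginv n X 0 1) u v) by (unfold ginv; cbv beta iota; unfold gdet; repeat (dpt_step ltac:(datoms u v H Hd0)); exact Hd0).
  erewrite (pd_Dpt 1 (ginv n X 1 0) u v) by (unfold ginv; cbv beta iota; unfold gdet; repeat (dpt_step ltac:(datoms u v H Hd0)); exact Hd0).
  erewrite (pd_Dpt 1 (ginv n X 1 1) u v) by (unfold ginv; cbv beta iota; unfold gdet; repeat (dpt_step ltac:(datoms u v H Hd0)); exact Hd0).
  destruct (Rels n U X HU HX Z w Hdet Hnull HW 0 u v H) as [_ [W00 W01]].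
  destruct (Rels n U X HU HX Z w Hdet Hnull HW 1 u v H) as [_ [W10 W11]].
  rewrite W00, W01, W10, W11. clear W00 W01 W10 W11.
  jnorm u v H. jnorm u v H.
  rewrite !(tcoef_eq n X (pdv 0 (Xd X 0) u v)), !(tcoef_eq n X (pdv 0 (Xd X 1) u v)), !(tcoef_eq n X (pdv 1 (Xd X 1) u v)).
  rewrite !(z_split n X Z).
  destruct (nu_param n U X HU HX Z w Hdet Hnull HW u v H) as [cc [N00 [N01 [N10 N11]]]].
  rewrite ?N00, ?N01, ?N10, ?N11. clear N00 N01 N10 N11.
  unfold dgk, G2. cbv beta.
  jnorm u v H. jnorm u v H.
  destruct (frame_at n U X Z w Hnull HW u v H)
    as [HD [Hdd [G00 [G11 [G01 [G10 [Hdt [I00 [I01 [I10 I11]]]]]]]]]].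
  fold (gdet n X u v). rewrite Hdt.
  rewrite ?I00, ?I01, ?I10, ?I11, ?G00, ?G01, ?G10, ?G11.
  pose proof (tnz n U X Z w Hnull HW u v H) as Hs.
  unfold Rsqr.
  msym u v.
  field. exact HD.
Qed.

End Id1.

Definition Xcut (n : nat) (X : R -> R -> vec) : R -> R -> vec :=
  fun a b c => if Nat.leb c n then X a b c else 0.

Lemma pd_const0 i : pd i (fun _ _ => 0) = (fun _ _ => 0).
Proof.
  apply functional_extensionality; intro a; apply functional_extensionality; intro b.
  apply pd_Dpt, Dpt_const.
Qed.

Lemma iter_pd_const0 w : iter_pd w (fun _ _ => 0) = (fun _ _ => 0).
Proof. induction w; simpl; [reflexivity| rewrite IHw; apply pd_const0]. Qed.

Lemma smooth_const0 U : smooth_on U (fun _ _ => 0).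
Proof.
  intro w. rewrite iter_pd_const0. split.
  - intros i u v _. apply has_pd_Dpt. exists 0. apply Dpt_const.
  - intros u v _ eps Heps. exists 1. split; [lra|]. intros. rewrite Rminus_0_r, Rabs_R0. lra.
Qed.

Lemma smooth_cut n U X : (forall c, (c <= n)%nat -> smooth_on U (fun a b => X a b c)) ->
  forall c, smooth_on U (fun a b => Xcut n X a b c).
Proof.
  intros H c. unfold Xcut. destruct (Nat.leb c n) eqn:E.
  - apply H. apply Nat.leb_le; auto.
  - apply smooth_const0.
Qed.

Section Transfer.
Variable n : nat.
Variable X : R -> R -> vec.
Let X' := Xcut n X.

Definition cfeq (F G : R -> R -> vec) := forall c, (c <= n)%nat -> (fun a b => F a b c) = (fun a b => G a b c).

Lemma cut_cfeq : cfeq X' X.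
Proof.
  intros c Hc. unfold X', Xcut. apply Nat.leb_le in Hc. rewrite Hc. reflexivity.
Qed.

Lemma cfeq_pt F G : cfeq F G -> forall a b, veq n (F a b) (G a b).
Proof. intros H a b c Hc. exact (equal_f (equal_f (H c Hc) a) b). Qed.

Lemma cfeq_pdv i F G : cfeq F G -> cfeq (pdv i F) (pdv i G).
Proof. intros H c Hc. unfold pdv. rewrite (H c Hc). reflexivity. Qed.

Lemma mink_veq x x' y y' : veq n x x' -> veq n y y' -> mink n x y = mink n x' y'.
Proof.
  intros H1 H2. unfold mink. apply sum_eq. intros k Hk. rewrite H1, H2 by lia. reflexivity.
Qed.

Lemma veq_refl x : veq n x x. Proof. intros c _; reflexivity. Qed.
Lemma veq_sym x y : veq n x y -> veq n y x. Proof. intros H c Hc; symmetry; auto. Qed.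
Lemma veq_trans x y z : veq n x y -> veq n y z -> veq n x z.
Proof. intros H1 H2 c Hc; rewrite H1; auto. Qed.

Lemma Xd_cfeq i : cfeq (Xd X' i) (Xd X i).
Proof. apply cfeq_pdv, cut_cfeq. Qed.

Lemma gmet_eq : gmet n X' = gmet n X.
Proof.
  apply functional_extensionality; intro i; apply functional_extensionality; intro j.
  apply functional_extensionality; intro a; apply functional_extensionality; intro b.
  unfold gmet. apply mink_veq; apply cfeq_pt, Xd_cfeq.
Qed.

Lemma gdet_eq : gdet n X' = gdet n X.
Proof. unfold gdet. rewrite gmet_eq. reflexivity. Qed.

Lemma ginv_eq : ginv n X' = ginv n X.
Proof. unfold ginv. rewrite gdet_eq, gmet_eq. reflexivity. Qed.

Lemma tcoef_veq Y Y' a b : veq n Y Y' -> tcoef n X' Y a b = tcoef n X Y' a b.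
Proof.
  intro H. apply functional_extensionality; intro i. unfold tcoef, sum2. rewrite ginv_eq.
  rewrite (mink_veq Y Y' (Xd X' 0 a b) (Xd X 0 a b)), (mink_veq Y Y' (Xd X' 1 a b) (Xd X 1 a b));
    auto using cfeq_pt, Xd_cfeq.
Qed.

Lemma tvec_veq p a b : veq n (tvec X' p a b) (tvec X p a b).
Proof.
  intros c Hc. unfold tvec, vsum2, vscale.
  rewrite (cfeq_pt _ _ (Xd_cfeq 0) a b c Hc), (cfeq_pt _ _ (Xd_cfeq 1) a b c Hc). reflexivity.
Qed.

Lemma norp_veq Y Y' a b : veq n Y Y' -> veq n (norp n X' Y a b) (norp n X Y' a b).
Proof.
  intros H c Hc. unfold norp, tanp, vsub. rewrite (tcoef_veq Y Y' a b H).
  rewrite (tvec_veq _ a b c Hc), (H c Hc). reflexivity.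
Qed.

Lemma tanp_veq Y Y' a b : veq n Y Y' -> veq n (tanp n X' Y a b) (tanp n X Y' a b).
Proof. intros H. unfold tanp. rewrite (tcoef_veq Y Y' a b H). apply tvec_veq. Qed.

Lemma IIc_pt i j a b c : (c <= n)%nat -> IIc n X' i j a b c = IIc n X i j a b c.
Proof.
  intro Hc. unfold IIc. apply norp_veq; auto.
  apply cfeq_pt, cfeq_pdv, Xd_cfeq.
Qed.

Lemma IIc_cfeq i j : cfeq (IIc n X' i j) (IIc n X i j).
Proof.
  intros c Hc. apply functional_extensionality; intro a; apply functional_extensionality; intro b.
  apply IIc_pt; auto.
Qed.

Lemma Hvec_cfeq : cfeq (Hvec n X') (Hvec n X).
Proof.
  intros c Hc. apply functional_extensionality; intro a; apply functional_extensionality; intro b.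
  unfold Hvec, vscale, vsum2. rewrite ginv_eq, !(IIc_pt _ _ a b c Hc). reflexivity.
Qed.

Lemma II_cfeq (p q : R -> R -> nat -> R) :
  cfeq (fun a b => II n X' (p a b) (q a b) a b) (fun a b => II n X (p a b) (q a b) a b).
Proof.
  intros c Hc. apply functional_extensionality; intro a; apply functional_extensionality; intro b.
  unfold II, vscale, vsum2. rewrite !(IIc_pt _ _ a b c Hc). reflexivity.
Qed.

Lemma II_veq p q a b : veq n (II n X' p q a b) (II n X p q a b).
Proof. intros c Hc. unfold II, vscale, vsum2. rewrite !(IIc_pt _ _ a b c Hc). reflexivity. Qed.

Lemma nablaperp_veq (p : nat -> R) F G u v : cfeq F G ->
  veq n (nablaperp n X' p F u v) (nablaperp n X p G u v).
Proof.
  intro H. unfold nablaperp. apply norp_veq.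
  intros c Hc. unfold Dv, vsum2, vscale.
  rewrite (cfeq_pt _ _ (cfeq_pdv 0 F G H) u v c Hc), (cfeq_pt _ _ (cfeq_pdv 1 F G H) u v c Hc).
  reflexivity.
Qed.

Lemma Kgauss_eq u v : Kgauss n X' u v = Kgauss n X u v.
Proof. unfold Kgauss, Rcoef, Gam. rewrite ginv_eq, gmet_eq, gdet_eq. reflexivity. Qed.

Lemma vnonzero_veq x y : veq n x y -> vnonzero n x -> vnonzero n y.
Proof. intros H [k [Hk Hx]]. exists k. split; auto. rewrite <- H; auto. Qed.

End Transfer.

Theorem mainTheorem6 (n : nat) (U : R -> R -> Prop) (X : R -> R -> vec)
  (Z : vec) (w : R -> R -> nat -> R) :
  open2 U ->
  (forall k, (k <= n)%nat -> smooth_on U (fun u v => X u v k)) ->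
  (* M is timelike: the induced metric has signature (1,1) *)
  (forall u v, U u v -> gdet n X u v < 0) ->
  (* Z is a constant unit spacelike vector *)
  mink n Z Z = 1 ->
  (* canonical null direction: Z^T is lightlike everywhere on M *)
  (forall u v, U u v ->
     vnonzero n (tanp n X Z u v) /\ mink n (tanp n X Z u v) (tanp n X Z u v) = 0) ->
  (* W is the lightlike tangent field with <Z^T, W> = -1 *)
  (forall u v, U u v ->
     vnonzero n (tvec X (w u v) u v) /\
     mink n (tvec X (w u v) u v) (tvec X (w u v) u v) = 0 /\
     mink n (tanp n X Z u v) (tvec X (w u v) u v) = -1) ->
  forall u v, U u v ->
    veq n (nablaperp n X (w u v) (Hvec n X) u v)
          (vopp (nablaperp n X (ZTc n X Z u v)
                   (fun a b => II n X (w a b) (w a b) a b) u v)) /\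
    mink n (Hvec n X u v) (Hvec n X u v)
      = - mink n (nablaperp n X (w u v) (Hvec n X) u v) (norp n X Z u v) /\
    Kgauss n X u v
      = mink n (Hvec n X u v) (Hvec n X u v)
        - mink n (II n X (w u v) (w u v) u v)
                 (II n X (ZTc n X Z u v) (ZTc n X Z u v) u v).
Proof.
  intros HU HXs Hdet HZ Hnull HW u v Huv.
  pose proof (smooth_cut n U X HXs) as HX'.
  assert (Hdet' : forall a b, U a b -> gdet n (Xcut n X) a b < 0).
  { intros a b H. rewrite gdet_eq. auto. }
  assert (Htan : forall a b, veq n (tanp n (Xcut n X) Z a b) (tanp n X Z a b))
    by (intros; apply tanp_veq, veq_refl).
  assert (Htv : forall a b, veq n (tvec (Xcut n X) (w a b) a b) (tvec X (w a b) a b))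
    by (intros; apply tvec_veq).
  assert (Hnull' : forall a b, U a b -> vnonzero n (tanp n (Xcut n X) Z a b) /\
      mink n (tanp n (Xcut n X) Z a b) (tanp n (Xcut n X) Z a b) = 0).
  { intros a b H. destruct (Hnull a b H) as [H1 H2]. split.
    - eapply vnonzero_veq; [apply veq_sym, Htan| exact H1].
    - rewrite (mink_veq n _ _ _ _ (Htan a b) (Htan a b)). exact H2. }
  assert (HW' : forall a b, U a b ->
     vnonzero n (tvec (Xcut n X) (w a b) a b) /\
     mink n (tvec (Xcut n X) (w a b) a b) (tvec (Xcut n X) (w a b) a b) = 0 /\
     mink n (tanp n (Xcut n X) Z a b) (tvec (Xcut n X) (w a b) a b) = -1).
  { intros a b H. destruct (HW a b H) as [H1 [H2 H3]]. split; [|split].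
    - eapply vnonzero_veq; [apply veq_sym, Htv| exact H1].
    - rewrite (mink_veq n _ _ _ _ (Htv a b) (Htv a b)). exact H2.
    - rewrite (mink_veq n _ _ _ _ (Htan a b) (Htv a b)). exact H3. }
  pose proof (ident1 n U (Xcut n X) HU HX' Z w Hdet' Hnull' HW' u v Huv) as I1.
  pose proof (ident2 n U (Xcut n X) HU HX' Z w Hdet' Hnull' HW' u v Huv) as I2.
  pose proof (ident3 n U (Xcut n X) HU HX' Z (w u v) u v Huv (proj2 (Hnull' u v Huv))
     (proj1 (proj2 (HW' u v Huv))) (proj2 (proj2 (HW' u v Huv)))) as I3.
  assert (HZT : ZTc n (Xcut n X) Z u v = ZTc n X Z u v) by (apply tcoef_veq, veq_refl).
  assert (VH : veq n (Hvec n (Xcut n X) u v) (Hvec n X u v)) by (apply cfeq_pt, Hvec_cfeq).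
  assert (VN1 : veq n (nablaperp n (Xcut n X) (w u v) (Hvec n (Xcut n X)) u v)
                      (nablaperp n X (w u v) (Hvec n X) u v))
    by (apply nablaperp_veq, Hvec_cfeq).
  assert (VN2 : veq n (nablaperp n (Xcut n X) (ZTc n X Z u v)
                   (fun a b => II n (Xcut n X) (w a b) (w a b) a b) u v)
                 (nablaperp n X (ZTc n X Z u v) (fun a b => II n X (w a b) (w a b) a b) u v))
    by (apply nablaperp_veq, II_cfeq).
  assert (VZ : veq n (norp n (Xcut n X) Z u v) (norp n X Z u v)) by (apply norp_veq, veq_refl).
  split; [|split].
  - intros c Hc. rewrite <- (VN1 c Hc), I1, HZT. unfold vopp. rewrite (VN2 c Hc). reflexivity.
  - rewrite <- (mink_veq n _ _ _ _ VH VH), <- (mink_veq n _ _ _ _ VN1 VZ). exact I2.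
  - rewrite <- (Kgauss_eq n X u v), I3, HZT.
    rewrite (mink_veq n _ _ _ _ VH VH).
    rewrite (mink_veq n _ _ _ _ (II_veq n X _ _ u v) (II_veq n X _ _ u v)). reflexivity.
Qed.
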